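(* In the setting described in the context, with all standing assumptions in force, for every $i\in\{1,\dots,N\}$: $$\lim_{t\to\infty}\Big\|\mathbf y_{(i,:)}^t-\frac1N\sum_{j=1}^N\nabla f_j(\mathbf x_{(j,:)}^t)\Big\|=0\qquad\text{and}\qquad \sum_{t=0}^\infty\gamma^t\Big\|\mathbf y_{(i,:)}^t-\frac1N\sum_{j=1}^N\nabla f_j(\mathbf x_{(j,:)}^t)\Big\|<\infty .$$
   Context: Problem. Let $N,B,d\ge1$. A vector $\mathbf x\in\mathbb R^{dB}$ is partitioned into blocks $\mathbf x=(\mathbf x_1,\dots,\mathbf x_B)$ with $\mathbf x_\ell\in\mathbb R^d$, and $\nabla_\ell$ denotes the partial gradient with respect to block $\ell$. Problem (P) is $$\min_{\mathbf x}\ U(\mathbf x)=\sum_{i=1}^Nf_i(\mathbf x)+\sum_{\ell=1}^B r_\ell(\mathbf x_\ell)\quad\text{s.t. }\mathbf x_\ell\in\mathcal K_\ell,\ \ell=1,\dots,B,$$ with $\mathcal K=\mathcal K_1\times\dots\times\mathcal K_B$. Problem assumptions: - each $\mathcal K_\ell\subseteq\mathbb R^d$ is nonempty, closed and convex; - each $f_i:\mathbb R^{dB}\to\mathbb R$ is $C^1$ on an open set containing $\mathcal K$, and $\nabla f_i$ is $L_i$-Lipschitz continuous and bounded on $\mathcal K$; - each $r_\ell:\mathbb R^d\to\mathbb R$ is convex with bounded subgradients on $\mathcal K_\ell$; - $U$ is coercive on $\mathcal K$. Network. $\mathcal G=(\{1,\dots,N\},\mathcal E)$ is a fixed, strongly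 connected digraph containing all self-loops. The in-neighbor set of $i$ is $\mathcal N_i=\{j:(j,i)\in\mathcal E\}$. Block selection. At each iteration $t\ge0$, agent $i$ picks $\ell_i^t\in\{1,\dots,B\}$. For each $i$ there is a finite $T_i>0$ with $\bigcup_{\tau=0}^{T_i-1}\{\ell_i^{t+\tau}\}=\{1,\dots,B\}$ for all $t\ge0$. Define $\mathcal N_{i,\ell}^t=\{j\in\mathcal N_i:\ell_j^t=\ell\}\cup\{i\}$ and $\mathcal E_\ell^t=\{(j,i)\in\mathcal E:j\in\mathcal N_{i,\ell}^t\}$. Weights. For each $\ell$ and $t$, $A_\ell^t=[a_{ij\ell}^t]$ satisfies $a_{ij\ell}^t>\kappa$ if $(j,i)\in\mathcal E_\ell^t$, $a_{ij\ell}^t=0$ otherwise (for a fixed $\kappa>0$), and $\mathbf 1^\top A_\ell^t=\mathbf 1^\top$. Surrogates. For each $i,\ell$, $\tilde f_{i,\ell}:\mathcal K_\ell\times\mathcal K\to\mathbb R$ satisfies: - $\tilde f_{i,\ell}(\cdot;\mathbf x)$ is $C^1$ and $\tau_i$-strongly convex on $\mathcal K_\ell$ uniformly in $\mathbf x\in\mathcal K$, with $\tau_i>0$; - $\nabla\tilde f_{i,\ell}(\mathbf x_\ell;\mathbf x)=\nabla_\ell f_i(\mathbf x)$ for all $\mathbf x\in\mathcal K$, where $\nabla\tilde f_{i,\ell}$ is the gradient in the first argument and $\mathbf x_\ell$ is the $\ell$-th block of $\mathbf x$; - $\nabla\tilde f_{i,\ell}(\mathbf z;\cdot)$ is Lipschitz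 continuous on $\mathcal K$ uniformly in $\mathbf z\in\mathcal K_\ell$. For $\mathbf w\in\mathcal K$ and $\mathbf g\in\mathbb R^d$ let $$\hat f_{i,\ell}(\mathbf z;\mathbf w,\mathbf g)=\tilde f_{i,\ell}(\mathbf z;\mathbf w)+(N\mathbf g-\nabla_\ell f_i(\mathbf w))^\top(\mathbf z-\mathbf w_\ell).$$ Step sizes. $0<\gamma^t\le1$, $\gamma^{t+1}\le\gamma^t$, $\sum_t\gamma^t=\infty$, $\sum_t(\gamma^t)^2<\infty$. Algorithm. Agent $i$ holds $\mathbf x_{(i,:)}^t=(\mathbf x_{(i,\ell)}^t)_\ell$, $\mathbf y_{(i,:)}^t=(\mathbf y_{(i,\ell)}^t)_\ell$ in $\mathbb R^{dB}$ and scalars $\phi_{(i,\ell)}^t$. Initialization: $\mathbf x_{(i,:)}^0\in\mathcal K$ arbitrary, $\mathbf y_{(i,:)}^0=\nabla f_i(\mathbf x_{(i,:)}^0)$, $\phi_{(i,\ell)}^0=1$. At iteration $t$, each agent $i$: - computes $\tilde{\mathbf x}_{(i,\ell_i^t)}^t=\arg\min_{\mathbf z\in\mathcal K_{\ell_i^t}}\hat f_{i,\ell_i^t}(\mathbf z;\mathbf x_{(i,:)}^t,\mathbf y_{(i,\ell_i^t)}^t)+r_{\ell_i^t}(\mathbf z)$; - sets $\Delta\mathbf x_{(i,\ell)}^t=\tilde{\mathbf x}_{(i,\ell)}^t-\mathbf x_{(i,\ell)}^t$ if $\ell=\ell_i^t$ and $\Delta\mathbf x_{(i,\ell)}^t=\mathbf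 0$ otherwise; - for every $\ell$ updates $$\phi_{(i,\ell)}^{t+1}=\sum_{j\in\mathcal N_{i,\ell}^t}a_{ij\ell}^t\phi_{(j,\ell)}^t,\qquad \mathbf x_{(i,\ell)}^{t+1}=\sum_{j\in\mathcal N_{i,\ell}^t}\frac{a_{ij\ell}^t\phi_{(j,\ell)}^t}{\phi_{(i,\ell)}^{t+1}}\big(\mathbf x_{(j,\ell)}^t+\gamma^t\Delta\mathbf x_{(j,\ell)}^t\big),$$ $$\mathbf y_{(i,\ell)}^{t+1}=\sum_{j\in\mathcal N_{i,\ell}^t}\frac{a_{ij\ell}^t}{\phi_{(i,\ell)}^{t+1}}\Big(\phi_{(j,\ell)}^t\mathbf y_{(j,\ell)}^t+\nabla_\ell f_j(\mathbf x_{(j,:)}^{t+1})-\nabla_\ell f_j(\mathbf x_{(j,:)}^t)\Big).$$ *)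

(* Defs.v *)
From Stdlib Require Import Reals.
Open Scope R_scope.

(* Conventions: agents are 0..N-1, blocks are 0..B-1, coordinates 0..d-1.
   A vector of R^d is a function nat -> R (only coordinates k < d matter);
   a vector of R^{dB} is a function nat -> nat -> R, x l k = k-th coordinate
   of block l (only l < B, k < d matter). All metric notions below use the
   Euclidean (semi)norm over the meaningful coordinates. *)

Definition vecd := nat -> R.
Definition vecx := nat -> nat -> R.

Fixpoint fsum (n : nat) (f : nat -> R) : R :=
  match n with
  | O => 0
  | S m => fsum m f + f m
  end.

Definition ipd (d : nat) (u v : vecd) : R := fsum d (fun k => u k * v k).
Definition normd (d : nat) (u : vecd) : R := sqrt (ipd d u u).
Definition subd (u v : vecd) : vecd := fun k => u k - v k.
Definition combd (th : R) (u v : vecd) : vecd := fun k => th * u k + (1 - th) * v k.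

Definition ipx (B d : nat) (x y : vecx) : R :=
  fsum B (fun l => fsum d (fun k => x l k * y l k)).
Definition normx (B d : nat) (x : vecx) : R := sqrt (ipx B d x x).
Definition subx (x y : vecx) : vecx := fun l k => x l k - y l k.

Definition inK (B : nat) (K : nat -> vecd -> Prop) (x : vecx) : Prop :=
  forall l, (l < B)%nat -> K l (x l).

Definition closedd (d : nat) (S : vecd -> Prop) : Prop :=
  forall (u : nat -> vecd) (z : vecd), (forall n, S (u n)) ->
    Un_cv (fun n => normd d (subd (u n) z)) 0 -> S z.

Definition convexd (S : vecd -> Prop) : Prop :=
  forall z w th, S z -> S w -> 0 <= th <= 1 -> S (combd th z w).

Definition openx (B d : nat) (O : vecx -> Prop) : Prop :=
  forall x, O x -> exists delta, delta > 0 /\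
    forall y, normx B d (subx y x) < delta -> O y.

Definition has_gradx (B d : nat) (f : vecx -> R) (g : vecx) (x : vecx) : Prop :=
  forall eps, eps > 0 -> exists delta, delta > 0 /\
    forall y, normx B d (subx y x) < delta ->
      Rabs (f y - f x - ipx B d g (subx y x)) <= eps * normx B d (subx y x).

Definition contx_at (B d : nat) (G : vecx -> vecx) (x : vecx) : Prop :=
  forall eps, eps > 0 -> exists delta, delta > 0 /\
    forall y, normx B d (subx y x) < delta -> normx B d (subx (G y) (G x)) < eps.

Definition has_gradd_on (d : nat) (S : vecd -> Prop) (f : vecd -> R) (g : vecd) (z : vecd) : Prop :=
  forall eps, eps > 0 -> exists delta, delta > 0 /\
    forall w, S w -> normd d (subd w z) < delta ->
      Rabs (f w - f z - ipd d g (subd w z)) <= eps * normd d (subd w z).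

Definition contd_on (d : nat) (S : vecd -> Prop) (G : vecd -> vecd) (z : vecd) : Prop :=
  forall eps, eps > 0 -> exists delta, delta > 0 /\
    forall w, S w -> normd d (subd w z) < delta -> normd d (subd (G w) (G z)) < eps.

Definition strongly_convex_on (d : nat) (S : vecd -> Prop) (tau : R) (f : vecd -> R) : Prop :=
  forall z w th, S z -> S w -> 0 <= th <= 1 ->
    f (combd th z w) <= th * f z + (1 - th) * f w
                        - tau / 2 * th * (1 - th) * (normd d (subd z w))^2.

Definition is_subgrad (d : nat) (r : vecd -> R) (g z : vecd) : Prop :=
  forall w, r w >= r z + ipd d g (subd w z).

(* directed reachability in the digraph with edge relation E (E j i : edge j -> i) *)
Inductive reach (E : nat -> nat -> Prop) : nat -> nat -> Prop :=
| reach_refl i : reach E i i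
| reach_step i j k : reach E i j -> E j k -> reach E i k.

(* (j,i) in E_l^t, i.e. (j,i) in E and j in N_{i,l}^t *)
Definition inEl (E : nat -> nat -> Prop) (sel : nat -> nat -> nat) (l t i j : nat) : Prop :=
  E j i /\ (sel j t = l \/ j = i).

Definition dx (sel : nat -> nat -> nat) (xt : nat -> nat -> vecd)
  (x : nat -> nat -> vecx) (t i l : nat) : vecd :=
  fun k => if Nat.eqb l (sel i t) then xt t i k - x t i l k else 0.

Definition fhat (N d : nat) (ft : nat -> nat -> vecd -> vecx -> R)
  (gf : nat -> vecx -> vecx) (i l : nat) (z : vecd) (w : vecx) (g : vecd) : R :=
  ft i l z w + ipd d (fun k => INR N * g k - gf i w l k) (subd z (w l)).

Definition track_err (N B d : nat) (gf : nat -> vecx -> vecx)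
  (x y : nat -> nat -> vecx) (t i : nat) : R :=
  normx B d (fun l k => y t i l k - / INR N * fsum N (fun j => gf j (x t j) l k)).

(* Main.v *)
Require Import Defs.
From Stdlib Require Import Reals Lra Lia Psatz ZArith Classical ClassicalEpsilon FunctionalExtensionality PropExtensionality.
Open Scope R_scope.

Lemma fsum_ext n f g : (forall k, (k < n)%nat -> f k = g k) -> fsum n f = fsum n g.
Proof. induction n; simpl; intros H; auto. rewrite IHn by (intros; apply H; lia). rewrite H by lia; auto. Qed.

Lemma fsum_plus n f g : fsum n (fun k => f k + g k) = fsum n f + fsum n g.
Proof. induction n; simpl; [lra|]. rewrite IHn; lra. Qed.

Lemma fsum_minus n f g : fsum n (fun k => f k - g k) = fsum n f - fsum n g.
Proof. induction n; simpl; [lra|]. rewrite IHn; lra. Qed.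

Lemma fsum_scal n c f : fsum n (fun k => c * f k) = c * fsum n f.
Proof. induction n; simpl; [lra|]. rewrite IHn; lra. Qed.

Lemma fsum_scalr n c f : fsum n (fun k => f k * c) = fsum n f * c.
Proof. induction n; simpl; [lra|]. rewrite IHn; lra. Qed.

Lemma fsum_zero n f : (forall k, (k < n)%nat -> f k = 0) -> fsum n f = 0.
Proof. induction n; simpl; intros H; auto. rewrite IHn by (intros; apply H; lia). rewrite H by lia. lra. Qed.

Lemma fsum_const n c : fsum n (fun _ => c) = INR n * c.
Proof. induction n; [simpl; lra|]. change (fsum (S n) (fun _ => c)) with (fsum n (fun _ => c) + c). rewrite IHn. rewrite S_INR; lra. Qed.

Lemma fsum_le n f g : (forall k, (k < n)%nat -> f k <= g k) -> fsum n f <= fsum n g.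
Proof. induction n; simpl; intros H; [lra|]. assert (fsum n f <= fsum n g) by (apply IHn; intros; apply H; lia).
  assert (f n <= g n) by (apply H; lia). lra. Qed.

Lemma fsum_nonneg n f : (forall k, (k < n)%nat -> 0 <= f k) -> 0 <= fsum n f.
Proof. intros H. rewrite <- (fsum_zero n (fun _ => 0)) by auto. apply fsum_le; auto. Qed.

Lemma fsum_abs n f : Rabs (fsum n f) <= fsum n (fun k => Rabs (f k)).
Proof. induction n; simpl. rewrite Rabs_R0; lra.
  eapply Rle_trans; [apply Rabs_triang|]. lra. Qed.

Lemma fsum_term n f j : (forall k, (k < n)%nat -> 0 <= f k) -> (j < n)%nat -> f j <= fsum n f.
Proof. induction n; simpl; intros H Hj; [lia|].
  assert (0 <= fsum n f) by (apply fsum_nonneg; intros; apply H; lia).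
  destruct (Nat.eq_dec j n). subst; lra.
  assert (f j <= fsum n f) by (apply IHn; [intros; apply H; lia|lia]).
  assert (0 <= f n) by (apply H; lia). lra. Qed.

Lemma fsum_swap n m (f : nat -> nat -> R) :
  fsum n (fun i => fsum m (fun j => f i j)) = fsum m (fun j => fsum n (fun i => f i j)).
Proof. induction n; simpl. symmetry; apply fsum_zero; auto.
  rewrite IHn. rewrite <- fsum_plus. auto. Qed.

Lemma fsum_sum_f_R0 g n : sum_f_R0 g n = fsum (S n) g.
Proof. induction n; simpl; [lra|]. rewrite IHn. simpl. lra. Qed.

Lemma fsum_split n m f : fsum (n + m) f = fsum n f + fsum m (fun k => f (n + k)%nat).
Proof. induction m; simpl. rewrite Nat.add_0_r; lra. rewrite Nat.add_succ_r. simpl. rewrite IHm. lra. Qed.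

Lemma ipd_self_nonneg d u : 0 <= ipd d u u.
Proof. unfold ipd. apply fsum_nonneg. intros; nra. Qed.

Lemma normd_nonneg d u : 0 <= normd d u.
Proof. unfold normd. apply sqrt_pos. Qed.

Lemma normd_sq d u : normd d u * normd d u = ipd d u u.
Proof. unfold normd. apply sqrt_sqrt, ipd_self_nonneg. Qed.

Lemma Rabs_le_sqrt a s : a * a <= s -> Rabs a <= sqrt s.
Proof. intros H. rewrite <- sqrt_Rsqr_abs. apply sqrt_le_1_alt. unfold Rsqr; lra. Qed.

Lemma normd_coord d u k : (k < d)%nat -> Rabs (u k) <= normd d u.
Proof. intros Hk. unfold normd. apply Rabs_le_sqrt. unfold ipd.
  apply (fsum_term d (fun k => u k * u k)); auto. intros; nra. Qed.

Lemma normd_zero d u : (forall k, (k < d)%nat -> u k = 0) -> normd d u = 0.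
Proof. intros H. unfold normd, ipd. rewrite fsum_zero. apply sqrt_0. intros k Hk; rewrite H; auto; lra. Qed.

Lemma sumsq_le n f : (forall k, (k < n)%nat -> 0 <= f k) ->
  fsum n (fun k => f k * f k) <= fsum n f * fsum n f.
Proof. induction n; simpl; intros H; [lra|].
  assert (0 <= fsum n f) by (apply fsum_nonneg; intros; apply H; lia).
  assert (0 <= f n) by (apply H; lia).
  assert (fsum n (fun k => f k * f k) <= fsum n f * fsum n f) by (apply IHn; intros; apply H; lia). nra. Qed.

Lemma sqrt_le_of_sq a s : 0 <= a -> s <= a * a -> sqrt s <= a.
Proof. intros Ha Hs. rewrite <- (sqrt_square a Ha). apply sqrt_le_1_alt. lra. Qed.

Lemma normd_le_l1 d u : normd d u <= fsum d (fun k => Rabs (u k)).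
Proof. unfold normd, ipd. apply sqrt_le_of_sq. apply fsum_nonneg; intros; apply Rabs_pos.
  eapply Rle_trans; [|apply sumsq_le; intros; apply Rabs_pos].
  right. apply fsum_ext. intros. rewrite <- Rabs_mult. rewrite Rabs_right; auto. nra. Qed.

Lemma abs0 x : Rabs x <= 0 -> x = 0.
Proof. intros H. destruct (Rcase_abs x); [rewrite Rabs_left in H|rewrite Rabs_right in H]; lra. Qed.

Lemma CS_aux d u v : ipd d u v <= normd d u * normd d v.
Proof.
  set (a := normd d u). set (b := normd d v).
  assert (Ha : 0 <= a) by apply normd_nonneg. assert (Hb : 0 <= b) by apply normd_nonneg.
  assert (Hs : 0 <= fsum d (fun k => (b * u k - a * v k) * (b * u k - a * v k))) by (apply fsum_nonneg; intros k _; pose proof (Rle_0_sqr (b*u k - a*v k)); unfold Rsqr in *; lra).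
  assert (E : fsum d (fun k => (b * u k - a * v k) * (b * u k - a * v k)) =
     b*b*ipd d u u - 2*a*b*ipd d u v + a*a*ipd d v v).
  { unfold ipd. rewrite <- !fsum_scal. rewrite <- fsum_minus, <- fsum_plus. apply fsum_ext; intros; ring. }
  rewrite E in Hs. rewrite <- (normd_sq d u), <- (normd_sq d v) in Hs. fold a b in Hs.
  destruct (Req_dec a 0) as [Ha0|Ha0].
  { assert (ipd d u v = 0). { unfold ipd. apply fsum_zero. intros k Hk.
      pose proof (normd_coord d u k Hk). fold a in H. rewrite Ha0 in H.
      assert (u k = 0) by (apply abs0; pose proof (Rabs_pos (u k)); lra). rewrite H0; ring. }
    rewrite H, Ha0; lra. }
  destruct (Req_dec b 0) as [Hb0|Hb0].
  { assert (ipd d u v = 0). { unfold ipd. apply fsum_zero. intros k Hk.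
      pose proof (normd_coord d v k Hk). fold b in H. rewrite Hb0 in H.
      assert (v k = 0) by (apply abs0; pose proof (Rabs_pos (v k)); lra). rewrite H0; ring. }
    rewrite H, Hb0; lra. }
  assert (0 < a*b) by (apply Rmult_lt_0_compat; lra).
  assert (a*b*(a*b - ipd d u v) >= 0) by nra. nra. Qed.

Lemma CS d u v : Rabs (ipd d u v) <= normd d u * normd d v.
Proof. apply Rabs_le. split.
  - assert (ipd d u (fun k => - v k) <= normd d u * normd d (fun k => - v k)) by apply CS_aux.
    assert (normd d (fun k => - v k) = normd d v).
    { unfold normd, ipd. f_equal. apply fsum_ext; intros; ring. }
    assert (ipd d u (fun k => - v k) = - ipd d u v).
    { unfold ipd. replace (- fsum d (fun k => u k * v k)) with (-1 * fsum d (fun k => u k * v k)) by ring.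
      rewrite <- (fsum_scal d (-1)). apply fsum_ext; intros; ring. }
    rewrite H0, H1 in H. lra.
  - apply CS_aux. Qed.

Lemma ipx_eq B d x y : ipx B d x y = fsum B (fun l => ipd d (x l) (y l)).
Proof. reflexivity. Qed.

Lemma normx_nonneg B d x : 0 <= normx B d x.
Proof. apply sqrt_pos. Qed.

Lemma ipx_self_nonneg B d x : 0 <= ipx B d x x.
Proof. apply fsum_nonneg; intros; apply fsum_nonneg; intros; nra. Qed.

Lemma normd_le_normx B d x l : (l < B)%nat -> normd d (x l) <= normx B d x.
Proof. intros Hl. unfold normd, normx. apply sqrt_le_1_alt. rewrite ipx_eq.
  apply (fsum_term B (fun l => ipd d (x l) (x l))); auto. intros; apply ipd_self_nonneg. Qed.

Lemma normx_coord B d x l k : (l < B)%nat -> (k < d)%nat -> Rabs (x l k) <= normx B d x.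
Proof. intros; eapply Rle_trans; [apply normd_coord; eauto|apply normd_le_normx; auto]. Qed.

Lemma normx_le_l1 B d x : normx B d x <= fsum B (fun l => fsum d (fun k => Rabs (x l k))).
Proof. unfold normx. apply sqrt_le_of_sq.
  apply fsum_nonneg; intros; apply fsum_nonneg; intros; apply Rabs_pos.
  eapply Rle_trans; [|apply sumsq_le; intros; apply fsum_nonneg; intros; apply Rabs_pos].
  rewrite ipx_eq. apply fsum_le. intros l Hl.
  rewrite <- normd_sq. assert (0 <= normd d (x l)) by apply normd_nonneg.
  pose proof (normd_le_l1 d (x l)). nra. Qed.

Lemma normx_zero B d x : (forall l k, (l < B)%nat -> (k < d)%nat -> x l k = 0) -> normx B d x = 0.
Proof. intros H. unfold normx. rewrite ipx_eq. rewrite fsum_zero. apply sqrt_0.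
  intros l Hl. unfold ipd. apply fsum_zero. intros k Hk. rewrite H; auto; ring. Qed.

Lemma Rabs_le_inv x e : Rabs x <= e -> - e <= x <= e.
Proof. intros H. destruct (Rcase_abs x); [rewrite Rabs_left in H|rewrite Rabs_right in H]; lra. Qed.

Section Prod.
Variable N : nat.
Variable A : nat -> nat -> nat -> R.
Hypothesis A_nonneg : forall t i j, (i < N)%nat -> (j < N)%nat -> 0 <= A t i j.
Hypothesis A_col : forall t j, (j < N)%nat -> fsum N (fun i => A t i j) = 1.

Fixpoint P (s n : nat) : nat -> nat -> R :=
  match n with
  | O => fun i j => if Nat.eqb i j then 1 else 0
  | S n' => fun i j => fsum N (fun m => A (s + n') i m * P s n' m j)
  end.

Lemma P_nonneg s n i j : (i < N)%nat -> (j < N)%nat -> 0 <= P s n i j.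
Proof. revert i. induction n; intros i Hi Hj; simpl.
  destruct (Nat.eqb i j); lra.
  apply fsum_nonneg. intros m Hm. apply Rmult_le_pos; auto. Qed.

Lemma fsum_delta n (f : nat -> R) j : (j < n)%nat ->
  fsum n (fun m => (if Nat.eqb m j then 1 else 0) * f m) = f j.
Proof. induction n; intros Hj; [lia|]. simpl.
  destruct (Nat.eq_dec j n).
  - subst. rewrite Nat.eqb_refl. rewrite fsum_zero. ring.
    intros k Hk. destruct (Nat.eqb_spec k n); [lia|ring].
  - rewrite IHn by lia. destruct (Nat.eqb_spec n j); [lia|ring]. Qed.

Lemma fsum_delta' n (f : nat -> R) j : (j < n)%nat ->
  fsum n (fun m => f m * (if Nat.eqb m j then 1 else 0)) = f j.
Proof. intros. rewrite <- (fsum_delta n f j) by auto. apply fsum_ext; intros; ring. Qed.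

Lemma fsum_delta2 n (f : nat -> R) j : (j < n)%nat ->
  fsum n (fun m => (if Nat.eqb j m then 1 else 0) * f m) = f j.
Proof. intros. rewrite <- (fsum_delta n f j) by auto. apply fsum_ext; intros. rewrite Nat.eqb_sym; auto. Qed.

Lemma P_col s n j : (j < N)%nat -> fsum N (fun i => P s n i j) = 1.
Proof. induction n; intros Hj; simpl.
  - rewrite (fsum_ext N _ (fun i => (if Nat.eqb i j then 1 else 0) * 1)) by (intros; ring).
    apply fsum_delta; auto.
  - rewrite fsum_swap. rewrite <- (IHn Hj). apply fsum_ext. intros m Hm.
    rewrite fsum_scalr. rewrite A_col; auto; ring. Qed.

Lemma P_le1 s n i j : (i < N)%nat -> (j < N)%nat -> P s n i j <= 1.
Proof. intros. rewrite <- (P_col s n j) by auto.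
  apply (fsum_term N (fun i => P s n i j)); auto. intros; apply P_nonneg; auto. Qed.

Lemma P_comp s n m i j : (i < N)%nat -> (j < N)%nat ->
  P s (n + m) i j = fsum N (fun q => P (s + n) m i q * P s n q j).
Proof. revert i. induction m; intros i Hi Hj.
  - simpl. rewrite Nat.add_0_r. rewrite fsum_delta2; auto.
  - rewrite Nat.add_succ_r. simpl.
    rewrite (fsum_ext N _ (fun r => fsum N (fun q => A (s + (n + m)) i r * P (s + n) m r q * P s n q j))).
    2:{ intros r Hr. rewrite IHm by auto. rewrite <- fsum_scal. apply fsum_ext; intros; ring. }
    rewrite fsum_swap. apply fsum_ext. intros q Hq. rewrite <- fsum_scalr.
    apply fsum_ext. intros r Hr. rewrite Nat.add_assoc. ring. Qed.

Variable kappa : R.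
Hypothesis kappa_pos : 0 < kappa.
Hypothesis A_diag : forall t i, (i < N)%nat -> kappa <= A t i i.

Lemma P_diag s n i : (i < N)%nat -> kappa ^ n <= P s n i i.
Proof. induction n; intros Hi; simpl. rewrite Nat.eqb_refl; lra.
  eapply Rle_trans; [|apply (fsum_term N (fun m => A (s + n) i m * P s n m i) i)]; auto.
  apply Rmult_le_compat; try lra; auto. left; apply pow_lt; lra.
  intros; apply Rmult_le_pos; auto; apply P_nonneg; auto. Qed.

Lemma kappa_le1 : (0 < N)%nat -> kappa <= 1.
Proof. intros HN. rewrite <- (A_col 0 0) by auto.
  eapply Rle_trans; [apply (A_diag 0 0); auto|]. apply (fsum_term N (fun i => A 0 i 0)); auto. Qed.

Lemma P_ge_mid s n m i q j : (i < N)%nat -> (j < N)%nat -> (q < N)%nat ->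
  P (s + n) m i q * P s n q j <= P s (n + m) i j.
Proof. intros. rewrite P_comp by auto.
  apply (fsum_term N (fun q => P (s + n) m i q * P s n q j)); auto.
  intros; apply Rmult_le_pos; apply P_nonneg; auto. Qed.

Variable Ed : nat -> nat -> Prop.
Variable act : nat -> nat -> Prop.
Hypothesis Ed_nodes : forall j i, Ed j i -> (j < N)%nat /\ (i < N)%nat.
Hypothesis A_edge : forall t i j, Ed j i -> act j t -> kappa <= A t i j.
Variable Tm : nat.
Hypothesis act_cyc : forall j t, (j < N)%nat -> exists s, (s < Tm)%nat /\ act j (t + s).

Lemma P_path j i : reach Ed j i -> (j < N)%nat -> (i < N)%nat -> exists n0,
  forall s n, (n0 <= n)%nat -> kappa ^ n <= P s n i j.
Proof.
  induction 1 as [i|j k i Hr IH He]; intros Hj Hi.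
  - exists O. intros; apply P_diag; auto.
  - destruct (Ed_nodes _ _ He) as [Hk _].
    destruct (IH Hj Hk) as [n0 Hn0]. exists (n0 + Tm)%nat. intros s n Hn.
    destruct (act_cyc k (s + n0) Hk) as [sg [Hsg Hact]].
    set (tau := (n0 + sg)%nat).
    assert (H1 : kappa ^ (S tau) <= P s (S tau) i j).
    { simpl. eapply Rle_trans; [|apply (fsum_term N (fun m => A (s + tau) i m * P s tau m j) k)]; auto.
      apply Rmult_le_compat; try lra. left; apply pow_lt; lra.
      apply A_edge; auto. unfold tau; rewrite Nat.add_assoc; auto.
      apply Hn0; unfold tau; lia.
      intros; apply Rmult_le_pos; auto; apply P_nonneg; auto. }
    assert (H2 : kappa ^ (n - S tau) <= P (s + S tau) (n - S tau) i i) by (apply P_diag; auto).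
    replace n with (S tau + (n - S tau))%nat by (unfold tau in *; lia).
    rewrite pow_add.
    eapply Rle_trans; [|apply (P_ge_mid s (S tau) (n - S tau) i i j); auto].
    rewrite Rmult_comm. apply Rmult_le_compat; auto; left; apply pow_lt; lra. Qed.

Lemma finite_choice (Q : nat -> nat -> Prop) n :
  (forall i w w', Q i w -> (w <= w')%nat -> Q i w') ->
  (forall i, (i < n)%nat -> exists w, Q i w) -> exists w, forall i, (i < n)%nat -> Q i w.
Proof. intros Hm. induction n; intros H. exists O; intros; lia.
  destruct IHn as [w Hw]. intros; apply H; lia.
  destruct (H n) as [w' Hw']. lia.
  exists (Nat.max w w'). intros i Hi. destruct (Nat.eq_dec i n).
  subst. eapply Hm; eauto; lia. eapply Hm. apply Hw; lia. lia. Qed.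

Hypothesis sc : forall i j, (i < N)%nat -> (j < N)%nat -> reach Ed i j.

Lemma P_window : exists W, (1 <= W)%nat /\ forall n s i j, (W <= n)%nat -> (i < N)%nat -> (j < N)%nat ->
  kappa ^ n <= P s n i j.
Proof.
  assert (exists w, forall j, (j < N)%nat -> forall i, (i < N)%nat ->
     forall s n, (w <= n)%nat -> kappa ^ n <= P s n i j) as [w Hw].
  { apply finite_choice.
    - intros j w w' H Hle i Hi s n Hn. apply H; auto; lia.
    - intros j Hj. apply finite_choice.
      + intros i w w' H Hle s n Hn. apply H; auto; lia.
      + intros i Hi. destruct (P_path j i) as [n0 Hn0]; auto. exists n0. intros; auto. }
  exists (S w). split. lia. intros. apply Hw; auto; lia. Qed.


Lemma contract (v M : nat -> R) lo w eta :
  (forall q, (q < N)%nat -> lo <= v q <= lo + w) ->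
  (forall q, (q < N)%nat -> eta <= M q) -> fsum N M = 1 ->
  lo + eta * fsum N (fun q => v q - lo) <= fsum N (fun q => v q * M q) <=
  lo + eta * fsum N (fun q => v q - lo) + w * (1 - INR N * eta).
Proof. intros Hv HM HS. split.
  - replace (fsum N (fun q => v q * M q)) with (lo * fsum N M + fsum N (fun q => (v q - lo) * M q)).
    2:{ rewrite <- fsum_scal, <- fsum_plus. apply fsum_ext; intros; ring. }
    rewrite HS, Rmult_1_r. rewrite <- fsum_scal. apply Rplus_le_compat_l. apply fsum_le. intros q Hq.
    specialize (Hv q Hq); specialize (HM q Hq). nra.
  - replace (fsum N (fun q => v q * M q)) with ((lo + w) * fsum N M - fsum N (fun q => (lo + w - v q) * M q)).
    2:{ rewrite <- fsum_scal, <- fsum_minus. apply fsum_ext; intros; ring. }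
    rewrite HS, Rmult_1_r.
    assert (eta * fsum N (fun q => lo + w - v q) <= fsum N (fun q => (lo + w - v q) * M q)).
    { rewrite <- fsum_scal. apply fsum_le. intros q Hq. specialize (Hv q Hq); specialize (HM q Hq). nra. }
    assert (fsum N (fun q => lo + w - v q) = INR N * w - fsum N (fun q => v q - lo)).
    { rewrite <- fsum_const, <- fsum_minus. apply fsum_ext; intros; ring. }
    rewrite H0 in H. nra. Qed.

Variable W : nat.
Hypothesis W_pos : (1 <= W)%nat.
Hypothesis W_win : forall s i j, (i < N)%nat -> (j < N)%nat -> kappa ^ W <= P s W i j.

Definition rho := 1 - INR N * kappa ^ W.

Lemma spread k : forall s n i, (k * W <= n)%nat -> (i < N)%nat -> exists lo,
  forall j, (j < N)%nat -> lo <= P s n i j <= lo + rho ^ k.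
Proof. induction k; intros s n i Hn Hi.
  - exists 0. intros j Hj. simpl. split. apply P_nonneg; auto. pose proof (P_le1 s n i j Hi Hj); lra.
  - destruct (IHk (s + W)%nat (n - W)%nat i) as [lo Hlo]; auto. simpl in Hn; lia.
    exists (lo + kappa ^ W * fsum N (fun q => P (s + W) (n - W) i q - lo)).
    intros j Hj. replace (P s n i j) with (P s (W + (n - W)) i j) by (f_equal; simpl in Hn; lia).
    rewrite P_comp by auto.
    pose proof (contract (fun q => P (s + W) (n - W) i q) (fun q => P s W q j) lo (rho ^ k) (kappa ^ W)
      Hlo (fun q Hq => W_win s q j Hq Hj) (P_col s W j Hj)) as [H1 H2].
    split; auto. eapply Rle_trans; [apply H2|]. simpl. unfold rho. lra. Qed.
End Prod.

Lemma abs_lin_bound n (c x : nat -> R) K : (forall j, (j < n)%nat -> Rabs (c j) <= K) ->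
  Rabs (fsum n (fun j => c j * x j)) <= K * fsum n (fun j => Rabs (x j)).
Proof. intros H. eapply Rle_trans; [apply fsum_abs|]. rewrite <- fsum_scal. apply fsum_le.
  intros j Hj. rewrite Rabs_mult. apply Rmult_le_compat_r. apply Rabs_pos. auto. Qed.

Lemma convex_comb_bounds n (v w : nat -> R) lo hi :
  (forall q, (q < n)%nat -> lo <= v q <= hi) -> (forall q, (q < n)%nat -> 0 <= w q) -> fsum n w = 1 ->
  lo <= fsum n (fun q => v q * w q) <= hi.
Proof. intros Hv Hw Hs. split.
  - replace lo with (fsum n (fun q => lo * w q)) by (rewrite fsum_scal, Hs; ring).
    apply fsum_le; intros q Hq; specialize (Hv q Hq); specialize (Hw q Hq); nra.
  - replace hi with (fsum n (fun q => hi * w q)) by (rewrite fsum_scal, Hs; ring).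
    apply fsum_le; intros q Hq; specialize (Hv q Hq); specialize (Hw q Hq); nra. Qed.

Section PushSum.
Variable N : nat.
Hypothesis HN : (1 <= N)%nat.
Variable A : nat -> nat -> nat -> R.
Hypothesis A_nonneg : forall t i j, (i < N)%nat -> (j < N)%nat -> 0 <= A t i j.
Hypothesis A_col : forall t j, (j < N)%nat -> fsum N (fun i => A t i j) = 1.
Variable kappa : R.
Hypothesis kappa_pos : 0 < kappa.
Hypothesis A_diag : forall t i, (i < N)%nat -> kappa <= A t i i.
Variable W : nat.
Hypothesis W_pos : (1 <= W)%nat.
Hypothesis W_win : forall s i j, (i < N)%nat -> (j < N)%nat -> kappa ^ W <= P N A s W i j.

Notation PP := (P N A).
Definition kern n := rho N kappa W ^ (n / W).

Variable phi : nat -> nat -> R.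
Hypothesis phi0 : forall i, (i < N)%nat -> phi O i = 1.
Hypothesis phiS : forall t i, (i < N)%nat -> phi (S t) i = fsum N (fun j => A t i j * phi t j).

Lemma phi_P t i : (i < N)%nat -> phi t i = fsum N (fun j => PP 0 t i j).
Proof. revert i; induction t; intros i Hi.
  - rewrite phi0 by auto. simpl. rewrite (fsum_ext N _ (fun j => (if Nat.eqb i j then 1 else 0) * 1)) by (intros; ring).
    rewrite fsum_delta2; auto.
  - rewrite phiS by auto. simpl.
    rewrite (fsum_ext N _ (fun j => fsum N (fun q => A t i j * PP 0 t j q))).
    2:{ intros j Hj. rewrite IHt by auto. rewrite fsum_scal; auto. }
    rewrite fsum_swap. auto. Qed.

Lemma phi_nonneg t i : (i < N)%nat -> 0 <= phi t i.
Proof. intros. rewrite phi_P by auto. apply fsum_nonneg; intros; apply P_nonneg; auto. Qed.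

Lemma phi_sum t : fsum N (fun i => phi t i) = INR N.
Proof. rewrite (fsum_ext N _ (fun i => fsum N (fun j => PP 0 t i j))) by (intros; apply phi_P; auto).
  rewrite fsum_swap. rewrite (fsum_ext N _ (fun _ => 1)). rewrite fsum_const; ring.
  intros; apply P_col; auto. Qed.

Lemma phi_shift s t i : (s <= t)%nat -> (i < N)%nat ->
  phi t i = fsum N (fun q => PP s (t - s) i q * phi s q).
Proof. intros Hst Hi. rewrite phi_P by auto.
  rewrite (fsum_ext N _ (fun j => fsum N (fun q => PP (0 + s) (t - s) i q * PP 0 s q j))).
  2:{ intros j Hj. replace (PP 0 t i j) with (PP 0 (s + (t - s)) i j) by (f_equal; lia). apply P_comp; auto. }
  rewrite fsum_swap. apply fsum_ext. intros q Hq. rewrite phi_P by auto. rewrite <- fsum_scal. auto. Qed.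

Lemma kern_nonneg n : 0 <= rho N kappa W -> 0 <= kern n.
Proof. intros. unfold kern. apply pow_le; auto. Qed.

Lemma bracket s t i j : (s <= t)%nat -> (i < N)%nat -> (j < N)%nat ->
  Rabs (PP s (t - s) i j - phi t i / INR N) <= kern (t - s).
Proof. intros Hst Hi Hj.
  assert (HNp : 0 < INR N) by (apply lt_0_INR; lia).
  destruct (spread N A A_nonneg A_col kappa W W_pos W_win ((t - s) / W) s (t - s) i) as [lo Hlo]; auto.
  rewrite Nat.mul_comm. apply Nat.Div0.mul_div_le.
  assert (lo <= phi t i / INR N <= lo + rho N kappa W ^ ((t - s) / W)).
  { rewrite phi_shift with (s := s) by auto. unfold Rdiv. rewrite <- fsum_scalr.
    rewrite (fsum_ext N _ (fun q => PP s (t - s) i q * (phi s q * / INR N))) by (intros; ring).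
    apply convex_comb_bounds. auto. intros; apply Rmult_le_pos. apply phi_nonneg; auto. left; apply Rinv_0_lt_compat; auto.
    rewrite fsum_scalr, phi_sum. field. lra. }
  specialize (Hlo j Hj). unfold kern. apply Rabs_le. lra. Qed.

Lemma phi_lb t i : (i < N)%nat -> kappa ^ W <= phi t i.
Proof. intros Hi.
  assert (Hk1 : kappa <= 1) by (apply (kappa_le1 N A A_nonneg A_col kappa A_diag); lia).
  destruct (Compare_dec.le_lt_dec W t).
  - rewrite (phi_shift (t - W) t i) by (auto; lia). replace (t - (t - W))%nat with W by lia.
    apply Rle_trans with (fsum N (fun q => kappa ^ W * phi (t - W) q)).
    + rewrite fsum_scal, phi_sum. assert (1 <= INR N) by (apply (le_INR 1); lia).
      assert (0 < kappa ^ W) by (apply pow_lt; lra). nra.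
    + apply fsum_le. intros q Hq. apply Rmult_le_compat_r. apply phi_nonneg; auto. apply W_win; auto.
  - rewrite phi_P by auto. apply Rle_trans with (PP 0 t i i).
    + apply Rle_trans with (kappa ^ t). apply Rle_trans with (kappa ^ t * kappa ^ (W - t)).
      rewrite <- pow_add. replace (t + (W - t))%nat with W by lia. lra.
      assert (0 < kappa ^ t) by (apply pow_lt; lra). assert (kappa ^ (W - t) <= 1) by (rewrite <- (pow1 (W - t)); apply pow_incr; lra). nra.
      apply P_diag; auto.
    + apply (fsum_term N (fun j => PP 0 t i j)); auto. intros; apply P_nonneg; auto. Qed.

Variables u e : nat -> nat -> R.
Hypothesis uS : forall t i, (i < N)%nat -> u (S t) i = fsum N (fun j => A t i j * (u t j + e t j)).

Lemma u_sum t : fsum N (fun i => u t i) = fsum N (fun j => u O j) + fsum t (fun s => fsum N (fun j => e s j)).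
Proof. induction t; simpl. lra.
  rewrite (fsum_ext N _ (fun i => fsum N (fun j => A t i j * (u t j + e t j)))) by (intros; apply uS; auto).
  rewrite fsum_swap. rewrite (fsum_ext N _ (fun j => u t j + e t j)).
  rewrite fsum_plus. replace (fsum N (u t)) with (fsum N (fun i => u t i)) by reflexivity. rewrite IHt.
  replace (fsum N (e t)) with (fsum N (fun j => e t j)) by reflexivity. ring.
  intros j Hj. rewrite fsum_scalr, A_col; auto; ring. Qed.

Lemma P_one t i q : (i < N)%nat -> (q < N)%nat -> PP t 1 i q = A t i q.
Proof. intros. simpl. rewrite Nat.add_0_r. rewrite fsum_delta'; auto. Qed.

Lemma u_formula t i : (i < N)%nat -> u t i =
  fsum N (fun j => PP 0 t i j * u O j) + fsum t (fun s => fsum N (fun j => PP s (t - s) i j * e s j)).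
Proof. revert i; induction t; intros i Hi.
  - simpl. rewrite fsum_delta2; auto. lra.
  - rewrite uS by auto.
    rewrite (fsum_ext N _ (fun j => A t i j * (fsum N (fun q => PP 0 t j q * u O q) +
       fsum t (fun s => fsum N (fun q => PP s (t - s) j q * e s q))) + A t i j * e t j)).
    2:{ intros j Hj. rewrite IHt by auto. ring. }
    rewrite fsum_plus. cbn [fsum].
    rewrite (fsum_ext N (fun j => A t i j * e t j) (fun j => PP t (S t - t) i j * e t j)).
    2:{ intros j Hj. replace (S t - t)%nat with 1%nat by lia. rewrite P_one; auto. }
    rewrite (fsum_ext N (fun j => A t i j * (_ + _)) (fun j => A t i j * fsum N (fun q => PP 0 t j q * u O q)
      + A t i j * fsum t (fun s => fsum N (fun q => PP s (t - s) j q * e s q)))) by (intros; ring).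
    rewrite fsum_plus. rewrite Rplus_assoc. f_equal.
    + simpl. rewrite (fsum_ext N _ (fun j => fsum N (fun q => A t i j * PP 0 t j q * u O q))).
      rewrite fsum_swap. apply fsum_ext. intros q Hq. rewrite fsum_scalr. auto.
      intros j Hj. rewrite <- fsum_scal. apply fsum_ext; intros; ring.
    + f_equal.
      rewrite (fsum_ext N _ (fun j => fsum t (fun s => fsum N (fun q => A t i j * PP s (t - s) j q * e s q)))).
      2:{ intros j Hj. rewrite <- fsum_scal. apply fsum_ext; intros. rewrite <- fsum_scal. apply fsum_ext; intros; ring. }
      rewrite fsum_swap. apply fsum_ext. intros s Hs.
      rewrite fsum_swap. apply fsum_ext. intros q Hq.
      replace (S t - s)%nat with (S (t - s)) by lia. simpl.
      replace (s + (t - s))%nat with t by lia. rewrite fsum_scalr. auto. Qed.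

Lemma sub_lemma n (a x : nat -> R) c : fsum n (fun j => (a j - c) * x j) = fsum n (fun j => a j * x j) - c * fsum n (fun j => x j).
Proof. rewrite <- fsum_scal, <- fsum_minus. apply fsum_ext; intros; ring. Qed.

Lemma u_dev t i : (i < N)%nat -> 0 <= rho N kappa W ->
  Rabs (u t i - phi t i * fsum N (fun j => u t j) / INR N) <=
  kern t * fsum N (fun j => Rabs (u O j)) + fsum t (fun s => kern (t - s) * fsum N (fun j => Rabs (e s j))).
Proof. intros Hi Hr.
  assert (HNp : 0 < INR N) by (apply lt_0_INR; lia).
  rewrite u_sum, u_formula by auto.
  replace (fsum N (fun j => PP 0 t i j * u O j) + fsum t (fun s => fsum N (fun j => PP s (t - s) i j * e s j)) -
     phi t i * (fsum N (fun j => u O j) + fsum t (fun s => fsum N (fun j => e s j))) / INR N)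
   with (fsum N (fun j => (PP 0 t i j - phi t i / INR N) * u O j) +
         fsum t (fun s => fsum N (fun j => (PP s (t - s) i j - phi t i / INR N) * e s j))).
  2:{ rewrite sub_lemma. rewrite (fsum_ext t _ (fun s => fsum N (fun j => PP s (t - s) i j * e s j) - phi t i / INR N * fsum N (fun j => e s j))).
      2:{ intros; apply sub_lemma. }
      rewrite fsum_minus, fsum_scal. field. lra. }
  eapply Rle_trans; [apply Rabs_triang|]. apply Rplus_le_compat.
  - apply abs_lin_bound. intros j Hj. pose proof (bracket 0 t i j) as H. rewrite Nat.sub_0_r in H. apply H; auto; lia.
  - eapply Rle_trans; [apply fsum_abs|]. apply fsum_le. intros s Hs.
    apply abs_lin_bound. intros j Hj. apply bracket; auto; lia. Qed.

End PushSum.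

Section HahnBanach.
Variable d : nat.
Variable q : vecd -> R.
Hypothesis qH1 : forall e e', (forall k, (k < d)%nat -> e k = e' k) -> q e = q e'.
Hypothesis qH2 : forall e1 e2, q (fun k => e1 k + e2 k) <= q e1 + q e2.
Hypothesis qH3 : forall lam e, 0 < lam -> q (fun k => lam * e k) = lam * q e.

Lemma q0 : q (fun _ => 0) = 0.
Proof. pose proof (qH3 2 (fun _ => 0)) as H. simpl in H. rewrite (qH1 (fun _ => 2 * 0) (fun _ => 0)) in H by (intros; ring). lra. Qed.

Variable v0 : vecd.
Definition em (m : nat) : vecd := fun k => if Nat.eqb k m then 1 else 0.
Definition supp (m : nat) (x : vecd) := forall k, (m <= k)%nat -> x k = 0.

Lemma HB_base : forall al, al * q v0 <= q (fun k => al * v0 k + 0).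
Proof. intros al. rewrite (qH1 (fun k => al * v0 k + 0) (fun k => al * v0 k)) by (intros; ring).
  destruct (Rtotal_order al 0) as [Hl|[He|Hg]].
  - pose proof (qH2 (fun k => al * v0 k) (fun k => - al * v0 k)) as H. cbv beta in H.
    rewrite (qH1 (fun k => al * v0 k + - al * v0 k) (fun _ => 0)) in H by (intros; ring). rewrite q0 in H.
    rewrite (qH3 (- al) v0) in H by lra. lra.
  - subst. rewrite (qH1 (fun k => 0 * v0 k) (fun _ => 0)) by (intros; ring). rewrite q0. lra.
  - rewrite qH3 by lra. lra. Qed.

Lemma HB_ind m : (m <= d)%nat -> exists g : vecd, forall al x, supp m x ->
  al * q v0 + fsum m (fun k => g k * x k) <= q (fun k => al * v0 k + x k).
Proof.
  induction m; intros Hm.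
  - exists (fun _ => 0). intros al x Hx. simpl.
    rewrite (qH1 (fun k => al * v0 k + x k) (fun k => al * v0 k + 0)) by (intros; rewrite Hx; auto; lia). pose proof (HB_base al). lra.
  - destruct IHm as [g Hg]; [lia|].
    set (L := fun al x => al * q v0 + fsum m (fun k => g k * x k)).
    set (Lo := fun v => exists al x, supp m x /\ v = L al x - q (fun k => al * v0 k + x k - em m k)).
    set (Up := fun v => exists al x, supp m x /\ v = q (fun k => al * v0 k + x k + em m k) - L al x).
    assert (Hsep : forall u w, Lo u -> Up w -> u <= w).
    { intros u w [a1 [x1 [Hx1 ->]]] [a2 [x2 [Hx2 ->]]]. unfold L.
      pose proof (Hg (a1 + a2) (fun k => x1 k + x2 k)) as H.
      assert (supp m (fun k => x1 k + x2 k)) by (intros k Hk; rewrite Hx1, Hx2; auto; lra).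
      specialize (H H0). cbv beta in H. rewrite (fsum_ext m _ (fun k => g k * x1 k + g k * x2 k)) in H by (intros; ring).
      rewrite fsum_plus in H.
      pose proof (qH2 (fun k => a1 * v0 k + x1 k - em m k) (fun k => a2 * v0 k + x2 k + em m k)) as H1. cbv beta in H1.
      rewrite (qH1 _ (fun k => (a1 + a2) * v0 k + (x1 k + x2 k))) in H1 by (intros; ring). lra. }
    destruct (completeness Lo) as [c [Hc1 Hc2]].
    { exists (q (fun k => 0 * v0 k + 0 + em m k) - L 0 (fun _ => 0)). intros u Hu. apply Hsep; auto.
      exists 0, (fun _ => 0). split; auto. intros k _; auto. }
    { exists (L 0 (fun _ => 0) - q (fun k => 0 * v0 k + 0 - em m k)). exists 0, (fun _ => 0). split; auto. intros k _; auto. }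
    assert (Hcu : forall w, Up w -> c <= w) by (intros w Hw; apply Hc2; intros u Hu; apply Hsep; auto).
    exists (fun k => if Nat.eqb k m then c else g k).
    intros al x Hx. simpl. rewrite Nat.eqb_refl.
    set (x' := fun k => if Nat.eqb k m then 0 else x k).
    assert (Hx' : supp m x') by (intros k Hk; unfold x'; destruct (Nat.eqb_spec k m); auto; apply Hx; lia).
    assert (Hf : fsum m (fun k => (if Nat.eqb k m then c else g k) * x k) = fsum m (fun k => g k * x' k)).
    { apply fsum_ext. intros k Hk. unfold x'. destruct (Nat.eqb_spec k m); [lia|auto]. }
    rewrite Hf. set (t := x m).
    assert (Hxq : forall s : nat, q (fun k => al * v0 k + x k) = q (fun k => al * v0 k + x' k + t * em m k) ).
    { intros _. apply qH1. intros k Hk. unfold x', em, t. destruct (Nat.eqb_spec k m); subst; ring. }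
    rewrite (Hxq O).
    destruct (Rtotal_order t 0) as [Ht|[Ht|Ht]].
    +
      set (s := - t).
      assert (Hlo : Lo (L (al / s) (fun k => x' k / s) - q (fun k => al / s * v0 k + x' k / s - em m k))).
      { exists (al / s), (fun k => x' k / s). split; auto. intros k Hk. rewrite Hx'; auto. unfold Rdiv; ring. }
      specialize (Hc1 _ Hlo).
      assert (Hs : 0 < s) by (unfold s; lra).
      assert (E1 : L (al / s) (fun k => x' k / s) = L al x' / s).
      { unfold L. unfold Rdiv. rewrite Rmult_plus_distr_r. rewrite <- (fsum_scalr m (/ s)). f_equal. ring.
        apply fsum_ext; intros; ring. }
      assert (E2 : q (fun k => al * v0 k + x' k + t * em m k) = s * q (fun k => al / s * v0 k + x' k / s - em m k)).
      { rewrite <- qH3 by auto. apply qH1. intros k Hk. unfold s. field. lra. }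
      rewrite E1 in Hc1. rewrite E2.
      assert (Hq : L al x' <= s * c + s * q (fun k => al / s * v0 k + x' k / s - em m k)).
      { assert (H' : L al x' / s <= c + q (fun k => al / s * v0 k + x' k / s - em m k)) by lra.
        apply (Rmult_le_compat_l s) in H'; [|lra].
        replace (s * (L al x' / s)) with (L al x') in H' by (field; lra). lra. }
      unfold L in Hq. unfold s in *. unfold t in *. nra.
    + rewrite Ht. rewrite (qH1 (fun k => al * v0 k + x' k + 0 * em m k) (fun k => al * v0 k + x' k)) by (intros; ring).
      pose proof (Hg al x' Hx'). lra.
    + assert (Hup : Up (q (fun k => al / t * v0 k + x' k / t + em m k) - L (al / t) (fun k => x' k / t))).
      { exists (al / t), (fun k => x' k / t). split; auto. intros k Hk. rewrite Hx'; auto. unfold Rdiv; ring. }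
      specialize (Hcu _ Hup).
      assert (E1 : L (al / t) (fun k => x' k / t) = L al x' / t).
      { unfold L. unfold Rdiv. rewrite Rmult_plus_distr_r. rewrite <- (fsum_scalr m (/ t)). f_equal. ring.
        apply fsum_ext; intros; ring. }
      assert (E2 : q (fun k => al * v0 k + x' k + t * em m k) = t * q (fun k => al / t * v0 k + x' k / t + em m k)).
      { rewrite <- qH3 by auto. apply qH1. intros k Hk. field. lra. }
      rewrite E1 in Hcu. rewrite E2.
      assert (Hq : L al x' + t * c <= t * q (fun k => al / t * v0 k + x' k / t + em m k)).
      { assert (t * c <= t * (q (fun k => al / t * v0 k + x' k / t + em m k) - L al x' / t)) by (apply Rmult_le_compat_l; lra).
        replace (t * (q (fun k => al / t * v0 k + x' k / t + em m k) - L al x' / t)) with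
          (t * q (fun k => al / t * v0 k + x' k / t + em m k) - L al x') in H by (field; lra). lra. }
      unfold L in Hq. unfold t in *. lra. Qed.

Lemma HB : exists g : vecd, (forall e, ipd d g e <= q e) /\ q v0 <= ipd d g v0.
Proof. destruct (HB_ind d (le_n d)) as [g Hg]. exists g. split.
  - intros e. pose proof (Hg 0 (fun k => if Nat.ltb k d then e k else 0)) as H.
    assert (supp d (fun k => if Nat.ltb k d then e k else 0)).
    { intros k Hk. destruct (Nat.ltb_spec k d); auto; lia. }
    specialize (H H0). cbv beta in H. rewrite (qH1 (fun k => 0 * v0 k + (if Nat.ltb k d then e k else 0)) e) in H. unfold ipd.
    rewrite (fsum_ext d _ (fun k => g k * (if Nat.ltb k d then e k else 0))). lra.
    intros k Hk. destruct (Nat.ltb_spec k d); auto; lia.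
    intros k Hk. destruct (Nat.ltb_spec k d); [ring|lia].
  - pose proof (Hg 1 (fun k => if Nat.ltb k d then - v0 k else 0)) as H.
    assert (supp d (fun k => if Nat.ltb k d then - v0 k else 0)).
    { intros k Hk. destruct (Nat.ltb_spec k d); auto; lia. }
    specialize (H H0). cbv beta in H. rewrite (qH1 (fun k => 1 * v0 k + (if Nat.ltb k d then - v0 k else 0)) (fun _ => 0)) in H. rewrite q0 in H. unfold ipd.
    rewrite (fsum_ext d _ (fun k => - (g k * v0 k))) in H. 
    replace (fsum d (fun k => - (g k * v0 k))) with (- fsum d (fun k => g k * v0 k)) in H.
    lra.
    replace (- fsum d (fun k => g k * v0 k)) with (-1 * fsum d (fun k => g k * v0 k)) by ring.
    rewrite <- (fsum_scal d (-1)). apply fsum_ext; intros; ring.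
    intros k Hk. destruct (Nat.ltb_spec k d); [ring|lia].
    intros k Hk. destruct (Nat.ltb_spec k d); [ring|lia]. Qed.
End HahnBanach.

Definition is_glb (E : R -> Prop) (m : R) := (forall x, E x -> m <= x) /\ (forall b, (forall x, E x -> b <= x) -> b <= m).
Definition Inf (E : R -> Prop) : R := epsilon (inhabits 0) (is_glb E).

Lemma Inf_spec E : (exists x, E x) -> (exists b, forall x, E x -> b <= x) -> is_glb E (Inf E).
Proof. intros [x0 Hx0] [b Hb]. unfold Inf. apply epsilon_spec.
  destruct (completeness (fun y => E (- y))) as [m [Hm1 Hm2]].
  { exists (- b). intros y Hy. specialize (Hb _ Hy). lra. }
  { exists (- x0). rewrite Ropp_involutive; auto. }
  exists (- m). split.
  - intros x Hx. assert (- x <= m) by (apply Hm1; rewrite Ropp_involutive; auto). lra.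
  - intros b' Hb'. assert (m <= - b'). { apply Hm2. intros y Hy. specialize (Hb' _ Hy). lra. } lra. Qed.

Lemma glb_add E1 E2 m1 m2 x : is_glb E1 m1 -> is_glb E2 m2 -> (exists y, E2 y) ->
  (forall A B, E1 A -> E2 B -> x <= A + B) -> x <= m1 + m2.
Proof. intros [_ H1] [_ H2] [y0 Hy0] H.
  assert (forall B, E2 B -> x - B <= m1). { intros B HB. apply H1. intros A HA. specialize (H A B HA HB). lra. }
  assert (x - m1 <= m2). { apply H2. intros B HB. specialize (H0 B HB). lra. } lra. Qed.

Lemma eps_arg x y K : 0 <= K -> (forall eps, 0 < eps -> y - eps * K <= x) -> y <= x.
Proof. intros HK H. destruct (Rle_dec y x); auto. exfalso.
  assert (0 < (y - x) / (2 * (K + 1))) by (apply Rdiv_lt_0_compat; lra).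
  specialize (H _ H0). assert ((y - x) / (2 * (K + 1)) * K < y - x).
  { apply Rle_lt_trans with ((y - x) / (2 * (K+1)) * (K + 1)). apply Rmult_le_compat_l; lra.
    replace ((y - x) / (2 * (K + 1)) * (K + 1)) with ((y - x) / 2) by (field; lra). lra. }
  lra. Qed.

Lemma normd_scale d th u : 0 <= th -> normd d (fun k => th * u k) = th * normd d u.
Proof. intros Hth. unfold normd, ipd.
  rewrite (fsum_ext d _ (fun k => (th * th) * (u k * u k))) by (intros; ring).
  rewrite fsum_scal. rewrite sqrt_mult_alt by nra. rewrite sqrt_square; auto. Qed.

Lemma ipd_scale d g th u : ipd d g (fun k => th * u k) = th * ipd d g u.
Proof. unfold ipd. rewrite <- fsum_scal. apply fsum_ext; intros; ring. Qed.

Lemma ipd_ext d g u u' : (forall k, (k < d)%nat -> u k = u' k) -> ipd d g u = ipd d g u'.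
Proof. intros H; unfold ipd; apply fsum_ext; intros; rewrite H; auto. Qed.

Lemma ipd_ext_l d g g' u : (forall k, (k < d)%nat -> g k = g' k) -> ipd d g u = ipd d g' u.
Proof. intros H; unfold ipd; apply fsum_ext; intros; rewrite H; auto. Qed.

Lemma normd_ext d u u' : (forall k, (k < d)%nat -> u k = u' k) -> normd d u = normd d u'.
Proof. intros H; unfold normd, ipd. f_equal. apply fsum_ext; intros; rewrite H; auto. Qed.

Lemma ipd_plus_r d g u v : ipd d g (fun k => u k + v k) = ipd d g u + ipd d g v.
Proof. unfold ipd. rewrite <- fsum_plus. apply fsum_ext; intros; ring. Qed.

Lemma ipd_minus_l d g h u : ipd d (fun k => g k - h k) u = ipd d g u - ipd d h u.
Proof. unfold ipd. rewrite <- fsum_minus. apply fsum_ext; intros; ring. Qed.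

Lemma ipd_plus_l d g h u : ipd d (fun k => g k + h k) u = ipd d g u + ipd d h u.
Proof. unfold ipd. rewrite <- fsum_plus. apply fsum_ext; intros; ring. Qed.

Section MinBound.
Variable d : nat.
Variable S : vecd -> Prop.
Variable F : vecd -> R.
Variable gF : vecd -> vecd.
Variable r : vecd -> R.
Variable tau M : R.
Hypothesis tau_pos : 0 < tau.
Hypothesis S_conv : convexd S.
Hypothesis S_inv : forall z z', S z -> (forall k, (k < d)%nat -> z k = z' k) -> S z'.
Hypothesis F_grad : forall z, S z -> has_gradd_on d S F (gF z) z.
Hypothesis F_sc : strongly_convex_on d S tau F.
Hypothesis r_cvx : strongly_convex_on d (fun _ => True) 0 r.
Hypothesis r_bd : forall z g, S z -> is_subgrad d r g z -> normd d g <= M.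
Variables c xl a : vecd.
Hypothesis S_xl : S xl.
Hypothesis S_a : S a.
Hypothesis a_min : forall z, S z -> F a + ipd d c (subd a xl) + r a <= F z + ipd d c (subd z xl) + r z.

Lemma comb_sub th z u : (forall k, subd (combd th z u) u k = th * subd z u k).
Proof. intros k. unfold subd, combd. ring. Qed.

Lemma grad_dir u z : S u -> S z -> forall eps, 0 < eps -> exists th0, 0 < th0 /\ forall th, 0 < th <= th0 -> th <= 1 ->
  Rabs (F (combd th z u) - F u - th * ipd d (gF u) (subd z u)) <= eps * th * normd d (subd z u).
Proof. intros Hu Hz eps He. destruct (F_grad u Hu eps He) as [del [Hdel H]].
  exists (del / (normd d (subd z u) + 1)). split.
  { apply Rdiv_lt_0_compat; auto. pose proof (normd_nonneg d (subd z u)); lra. }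
  intros th [Hth0 Hth1] Hth2.
  assert (Hc : S (combd th z u)) by (apply S_conv; auto; lra).
  assert (Hn : normd d (subd (combd th z u) u) = th * normd d (subd z u)).
  { rewrite (normd_ext d _ (fun k => th * subd z u k)) by (intros; apply comb_sub). apply normd_scale; lra. }
  assert (Hi : ipd d (gF u) (subd (combd th z u) u) = th * ipd d (gF u) (subd z u)).
  { rewrite (ipd_ext d _ _ (fun k => th * subd z u k)) by (intros; apply comb_sub). apply ipd_scale. }
  rewrite <- Hi. replace (eps * th * normd d (subd z u)) with (eps * normd d (subd (combd th z u) u)) by (rewrite Hn; ring).
  apply H; auto. rewrite Hn. pose proof (normd_nonneg d (subd z u)).
  apply Rle_lt_trans with (del / (normd d (subd z u) + 1) * normd d (subd z u)).
  apply Rmult_le_compat_r; lra.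
  apply Rlt_le_trans with (del / (normd d (subd z u) + 1) * (normd d (subd z u) + 1)).
  apply Rmult_lt_compat_l; [apply Rdiv_lt_0_compat; lra|lra]. right; field; lra. Qed.

Lemma grad_ineq u z : S u -> S z ->
  ipd d (gF u) (subd z u) + tau / 2 * (normd d (subd z u))^2 <= F z - F u.
Proof. intros Hu Hz. set (D := normd d (subd z u)). assert (HD : 0 <= D) by apply normd_nonneg.
  apply (eps_arg _ _ (D + tau / 2 * D^2)). nra.
  intros eps He. destruct (grad_dir u z Hu Hz eps He) as [th0 [Hth0 Hg]].
  set (th := Rmin th0 (Rmin eps 1)).
  assert (Hth : 0 < th) by (unfold th; repeat apply Rmin_glb_lt; lra).
  assert (Hth1 : th <= th0) by apply Rmin_l.
  assert (Hth2 : th <= eps) by (unfold th; eapply Rle_trans; [apply Rmin_r|apply Rmin_l]).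
  assert (Hth3 : th <= 1) by (unfold th; eapply Rle_trans; [apply Rmin_r|apply Rmin_r]).
  specialize (Hg th (conj Hth Hth1) Hth3). fold D in Hg.
  pose proof (F_sc z u th Hz Hu (conj (Rlt_le _ _ Hth) Hth3)) as Hs. fold D in Hs.
  apply Rabs_le_inv in Hg. destruct Hg as [Hg _].
  set (g := ipd d (gF u) (subd z u)) in *.
  assert (th * (F z - F u) >= th * (g - eps * D + tau / 2 * (1 - th) * D^2)) by nra.
  assert (F z - F u >= g - eps * D + tau / 2 * (1 - th) * D^2).
  { apply Rle_ge. apply Rmult_le_reg_l with th; auto. lra. }
  assert (tau / 2 * th * D^2 <= tau / 2 * eps * D^2).
  { apply Rmult_le_compat_r. nra. apply Rmult_le_compat_l; lra. }
  nra. Qed.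

Lemma normd_neg_sub z u : normd d (subd u z) = normd d (subd z u).
Proof. unfold normd, ipd, subd. f_equal. apply fsum_ext; intros; ring. Qed.

Lemma mono : tau * (normd d (subd xl a))^2 <= ipd d (fun k => gF xl k - gF a k) (subd xl a).
Proof. pose proof (grad_ineq a xl S_a S_xl) as H1. pose proof (grad_ineq xl a S_xl S_a) as H2.
  rewrite normd_neg_sub in H2. rewrite ipd_minus_l.
  assert (ipd d (gF xl) (subd a xl) = - ipd d (gF xl) (subd xl a)).
  { unfold ipd, subd. replace (- fsum d (fun k => gF xl k * (xl k - a k))) with (-1 * fsum d (fun k => gF xl k * (xl k - a k))) by ring.
    rewrite <- fsum_scal. apply fsum_ext; intros; ring. }
  rewrite H in H2. lra. Qed.

Lemma r_comb th z u : 0 <= th <= 1 -> r (combd th z u) <= th * r z + (1 - th) * r u.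
Proof. intros H. pose proof (r_cvx z u th I I H). nra. Qed.

Definition Qd (w : vecd) (th : R) := (r (fun k => a k + th * w k) - r a) / th.

Lemma Qd_mono w t1 t2 : 0 < t1 -> t1 <= t2 -> t2 <= 1 -> Qd w t1 <= Qd w t2.
Proof. intros H1 H2 H3. unfold Qd.
  assert (E : (fun k => a k + t1 * w k) = combd (t1 / t2) (fun k => a k + t2 * w k) a).
  { apply functional_extensionality. intros k. unfold combd. field. lra. }
  rewrite E. pose proof (r_comb (t1 / t2) (fun k => a k + t2 * w k) a) as Hc.
  assert (0 <= t1 / t2 <= 1). { split. apply Rlt_le, Rdiv_lt_0_compat; lra.
    apply Rmult_le_reg_r with t2; [lra|]. unfold Rdiv. rewrite Rmult_assoc, Rinv_l; lra. }
  specialize (Hc H). unfold Rdiv at 1 3.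
  assert (r (combd (t1 / t2) (fun k => a k + t2 * w k) a) - r a <= t1 / t2 * (r (fun k => a k + t2 * w k) - r a)) by lra.
  apply Rmult_le_reg_l with t1; auto. replace (t1 * ((r (combd (t1 / t2) (fun k => a k + t2 * w k) a) - r a) * / t1)) with
    (r (combd (t1 / t2) (fun k => a k + t2 * w k) a) - r a) by (field; lra).
  replace (t1 * ((r (fun k => a k + t2 * w k) - r a) * / t2)) with (t1 / t2 * (r (fun k => a k + t2 * w k) - r a)) by (field; lra).
  auto. Qed.

Lemma F_inv z z' : S z -> S z' -> (forall k, (k < d)%nat -> z k = z' k) -> F z' = F z.
Proof. intros Hz Hz' He. destruct (F_grad z Hz 1 ltac:(lra)) as [del [Hdel H]].
  assert (Hn : normd d (subd z' z) = 0) by (apply normd_zero; intros k Hk; unfold subd; rewrite He; auto; ring).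
  specialize (H z' Hz'). rewrite Hn in H. specialize (H Hdel).
  assert (ipd d (gF z) (subd z' z) = 0) by (unfold ipd; apply fsum_zero; intros k Hk; unfold subd; rewrite He; auto; ring).
  rewrite H0 in H. apply Rabs_le_inv in H. lra. Qed.

Lemma a_min_mean w : (forall k, (k < d)%nat -> w k = a k) -> r a <= r w.
Proof. intros Hw. assert (Sw : S w) by (apply (S_inv a); auto; intros; rewrite Hw; auto).
  pose proof (a_min w Sw). rewrite (F_inv a w S_a Sw) in H by (intros; rewrite Hw; auto).
  rewrite (ipd_ext d c (subd w xl) (subd a xl)) in H by (intros k Hk; unfold subd; rewrite Hw; auto). lra. Qed.

Lemma Qd_pair w w' t1 t2 : (forall k, (k < d)%nat -> w k + w' k = 0) -> 0 < t1 <= 1 -> 0 < t2 <= 1 ->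
  0 <= Qd w t1 + Qd w' t2.
Proof. intros Hw H1 H2. set (t := Rmin t1 t2).
  assert (Ht : 0 < t) by (unfold t; apply Rmin_glb_lt; lra).
  assert (Qd w t <= Qd w t1) by (apply Qd_mono; auto; [apply Rmin_l|lra]).
  assert (Qd w' t <= Qd w' t2) by (apply Qd_mono; auto; [apply Rmin_r|lra]).
  assert (0 <= Qd w t + Qd w' t).
  { unfold Qd. assert (Hm : r a <= r (combd (1/2) (fun k => a k + t * w k) (fun k => a k + t * w' k))).
    { apply a_min_mean. intros k Hk. unfold combd. specialize (Hw k Hk).
      replace (1 / 2 * (a k + t * w k) + (1 - 1 / 2) * (a k + t * w' k)) with (a k + t / 2 * (w k + w' k)) by field.
      rewrite Hw. ring. }
    pose proof (r_comb (1/2) (fun k => a k + t * w k) (fun k => a k + t * w' k) ltac:(lra)).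
    replace ((r (fun k => a k + t * w k) - r a) / t + (r (fun k => a k + t * w' k) - r a) / t)
      with ((r (fun k => a k + t * w k) + r (fun k => a k + t * w' k) - 2 * r a) / t) by (field; lra).
    apply Rmult_le_pos; [lra|]. left; apply Rinv_0_lt_compat; auto. }
  lra. Qed.

Lemma Qd_opt z th : S z -> 0 < th <= 1 -> - ipd d (fun k => gF a k + c k) (subd z a) <= Qd (subd z a) th.
Proof. intros Hz Hth. set (D := normd d (subd z a)). assert (HD : 0 <= D) by apply normd_nonneg.
  apply (eps_arg _ _ D HD). intros eps He.
  destruct (grad_dir a z S_a Hz eps He) as [th0 [Hth0 Hg]].
  set (t := Rmin th th0).
  assert (Ht : 0 < t) by (unfold t; apply Rmin_glb_lt; lra).
  assert (Ht1 : t <= th) by apply Rmin_l. assert (Ht2 : t <= th0) by apply Rmin_r.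
  eapply Rle_trans; [|apply (Qd_mono _ t th); auto; lra].
  specialize (Hg t (conj Ht Ht2) ltac:(lra)). fold D in Hg. apply Rabs_le_inv in Hg.
  assert (Sc : S (combd t z a)) by (apply S_conv; auto; lra).
  pose proof (a_min _ Sc) as Hm.
  assert (E1 : ipd d c (subd (combd t z a) xl) = ipd d c (subd a xl) + t * ipd d c (subd z a)).
  { rewrite <- ipd_scale. rewrite <- ipd_plus_r. apply ipd_ext. intros k Hk. unfold subd, combd. ring. }
  assert (E2 : combd t z a = (fun k => a k + t * subd z a k)).
  { apply functional_extensionality; intros k; unfold combd, subd; ring. }
  rewrite E1 in Hm. rewrite E2 in Hm, Hg. rewrite ipd_plus_l.
  unfold Qd. apply Rmult_le_reg_l with t; auto.
  replace (t * ((r (fun k => a k + t * subd z a k) - r a) / t)) with (r (fun k => a k + t * subd z a k) - r a) by (field; lra).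
  nra. Qed.

Definition QS (e : vecd) (v : R) := exists w th, (forall k, (k < d)%nat -> w k = e k) /\ 0 < th <= 1 /\ v = Qd w th.
Definition qf (e : vecd) := Inf (QS e).

Lemma qf_glb e : is_glb (QS e) (qf e).
Proof. apply Inf_spec.
  - exists (Qd e 1). exists e, 1. repeat split; auto; lra.
  - exists (- Qd (fun k => - e k) 1). intros v [w [th [Hw [Hth ->]]]].
    pose proof (Qd_pair w (fun k => - e k) th 1) as H. assert (0 <= Qd w th + Qd (fun k => - e k) 1).
    apply H; auto; [intros k Hk; rewrite Hw; auto; ring|lra]. lra. Qed.

Lemma qf_le e w th : (forall k, (k < d)%nat -> w k = e k) -> 0 < th <= 1 -> qf e <= Qd w th.
Proof. intros. apply (proj1 (qf_glb e)). exists w, th; auto. Qed.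

Lemma qf_H1 e e' : (forall k, (k < d)%nat -> e k = e' k) -> qf e = qf e'.
Proof. intros H. unfold qf. f_equal. apply functional_extensionality. intros v. apply propositional_extensionality.
  unfold QS. split; intros [w [th [Hw Ht]]]; exists w, th; split; auto; intros k Hk; rewrite Hw; auto; rewrite H; auto. Qed.

Lemma Qd_add w1 w2 t : 0 < t -> 2 * t <= 1 -> Qd (fun k => w1 k + w2 k) t <= Qd w1 (2 * t) + Qd w2 (2 * t).
Proof. intros Ht Ht2. unfold Qd.
  assert (E : (fun k => a k + t * (w1 k + w2 k)) = combd (1/2) (fun k => a k + 2 * t * w1 k) (fun k => a k + 2 * t * w2 k)).
  { apply functional_extensionality; intros k; unfold combd; field. }
  rewrite E. pose proof (r_comb (1/2) (fun k => a k + 2 * t * w1 k) (fun k => a k + 2 * t * w2 k) ltac:(lra)).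
  apply Rmult_le_reg_l with (2 * t); [lra|].
  replace (2 * t * ((r (combd (1 / 2) (fun k => a k + 2 * t * w1 k) (fun k => a k + 2 * t * w2 k)) - r a) / t))
    with (2 * (r (combd (1 / 2) (fun k => a k + 2 * t * w1 k) (fun k => a k + 2 * t * w2 k)) - r a)) by (field; lra).
  replace (2 * t * ((r (fun k => a k + 2 * t * w1 k) - r a) / (2 * t) + (r (fun k => a k + 2 * t * w2 k) - r a) / (2 * t)))
    with (r (fun k => a k + 2 * t * w1 k) - r a + (r (fun k => a k + 2 * t * w2 k) - r a)) by (field; lra).
  lra. Qed.

Lemma qf_H2 e1 e2 : qf (fun k => e1 k + e2 k) <= qf e1 + qf e2.
Proof. apply (glb_add (QS e1) (QS e2)). apply qf_glb. apply qf_glb.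
  exists (Qd e2 1). exists e2, 1. repeat split; auto; lra.
  intros A B [w1 [t1 [Hw1 [Ht1 ->]]]] [w2 [t2 [Hw2 [Ht2 ->]]]].
  set (t := Rmin t1 t2 / 2).
  assert (Ht : 0 < t) by (unfold t; assert (0 < Rmin t1 t2) by (apply Rmin_glb_lt; lra); lra).
  assert (Htt1 : 2 * t <= t1) by (unfold t; pose proof (Rmin_l t1 t2); lra).
  assert (Htt2 : 2 * t <= t2) by (unfold t; pose proof (Rmin_r t1 t2); lra).
  eapply Rle_trans. apply (qf_le _ (fun k => w1 k + w2 k) t). intros k Hk; rewrite Hw1, Hw2; auto. lra.
  eapply Rle_trans. apply Qd_add; lra.
  apply Rplus_le_compat; apply Qd_mono; lra. Qed.

Lemma Qd_scale w lam t : 0 < lam -> 0 < t -> Qd (fun k => lam * w k) t = lam * Qd w (lam * t).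
Proof. intros Hl Ht. unfold Qd.
  replace (fun k => a k + t * (lam * w k)) with (fun k => a k + lam * t * w k)
    by (apply functional_extensionality; intros; ring).
  field. lra. Qed.

Lemma qf_scale_le lam e : 0 < lam -> qf (fun k => lam * e k) <= lam * qf e.
Proof. intros Hl.
  assert (forall v, QS e v -> qf (fun k => lam * e k) / lam <= v).
  { intros v [w [th [Hw [Ht ->]]]]. apply Rmult_le_reg_l with lam; auto.
    replace (lam * (qf (fun k => lam * e k) / lam)) with (qf (fun k => lam * e k)) by (field; lra).
    destruct (Rle_dec 1 lam).
    - replace (lam * Qd w th) with (Qd (fun k => lam * w k) (th / lam)).
      2:{ rewrite Qd_scale; [|lra|apply Rdiv_lt_0_compat; lra]. f_equal. f_equal. field. lra. }
      apply qf_le. intros k Hk; rewrite Hw; auto. split. apply Rdiv_lt_0_compat; lra.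
      apply Rmult_le_reg_l with lam; [lra|]. replace (lam * (th / lam)) with th by (field; lra). nra.
    - eapply Rle_trans. apply (qf_le _ (fun k => lam * w k) th). intros k Hk; rewrite Hw; auto. lra.
      rewrite Qd_scale by lra. apply Rmult_le_compat_l; [lra|]. apply Qd_mono; nra. }
  pose proof (proj2 (qf_glb e) _ H). apply Rmult_le_reg_l with (/ lam). apply Rinv_0_lt_compat; auto.
  replace (/ lam * (lam * qf e)) with (qf e) by (field; lra). unfold Rdiv in H0. lra. Qed.

Lemma qf_H3 lam e : 0 < lam -> qf (fun k => lam * e k) = lam * qf e.
Proof. intros Hl. apply Rle_antisym. apply qf_scale_le; auto.
  pose proof (qf_scale_le (/ lam) (fun k => lam * e k) ltac:(apply Rinv_0_lt_compat; auto)) as H. cbv beta in H.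
  rewrite (qf_H1 (fun k => / lam * (lam * e k)) e) in H by (intros; field; lra).
  apply Rmult_le_reg_l with (/ lam). apply Rinv_0_lt_compat; auto.
  replace (/ lam * (lam * qf e)) with (qf e) by (field; lra). auto. Qed.

Theorem min_bound : tau * normd d (subd xl a) <= normd d (fun k => gF xl k + c k) + M.
Proof.
  set (v0 := subd xl a). set (D := normd d v0). assert (HD : 0 <= D) by apply normd_nonneg.
  destruct (HB d qf qf_H1 qf_H2 qf_H3 v0) as [g [Hg1 Hg2]].
  assert (Hsub : is_subgrad d r g a).
  { intros w. pose proof (Hg1 (subd w a)). pose proof (qf_le (subd w a) (subd w a) 1 (fun k _ => eq_refl) ltac:(lra)).
    unfold Qd in H0. replace (fun k => a k + 1 * subd w a k) with w in H0 by (apply functional_extensionality; intros; unfold subd; ring).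
    unfold Rdiv in H0. rewrite Rinv_1, Rmult_1_r in H0. lra. }
  pose proof (r_bd a g S_a Hsub) as HgM.
  assert (HM : 0 <= M) by (pose proof (normd_nonneg d g); lra).
  assert (H1 : ipd d g v0 <= M * D).
  { pose proof (CS d g v0). apply Rabs_le_inv in H. fold D in H. pose proof (normd_nonneg d g). nra. }
  assert (H2 : - ipd d (fun k => gF a k + c k) v0 <= qf v0).
  { apply (proj2 (qf_glb v0)). intros v [w [th [Hw [Ht ->]]]].
    set (z := fun k => a k + w k).
    assert (Sz : S z). { apply (S_inv xl); auto. intros k Hk. unfold z. rewrite Hw; auto. unfold v0, subd; ring. }
    replace w with (subd z a) by (apply functional_extensionality; intros; unfold z, subd; ring).
    rewrite (ipd_ext d _ v0 (subd z a)). apply Qd_opt; auto.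
    intros k Hk. unfold z, subd. rewrite Hw; auto. unfold v0, subd; ring. }
  pose proof mono as Hmo. fold v0 D in Hmo.
  assert (E : ipd d (fun k => gF xl k - gF a k) v0 = ipd d (fun k => gF xl k + c k) v0 - ipd d (fun k => gF a k + c k) v0).
  { rewrite <- ipd_minus_l. apply ipd_ext_l. intros; ring. }
  rewrite E in Hmo.
  pose proof (CS d (fun k => gF xl k + c k) v0) as Hc. apply Rabs_le_inv in Hc. fold D in Hc.
  set (G := normd d (fun k => gF xl k + c k)) in *. assert (0 <= G) by apply normd_nonneg.
  assert (tau * D^2 <= (G + M) * D) by nra.
  destruct (Req_dec D 0). rewrite H3. nra.
  assert (0 < D) by lra. apply Rmult_le_reg_r with D; auto. nra. Qed.
End MinBound.

Definition bsum (f : nat -> R) := exists Bd, forall n, fsum n f <= Bd.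

Lemma bsum_le f g : (forall n, 0 <= f n <= g n) -> bsum g -> bsum f.
Proof. intros H [Bd HB]. exists Bd. intros n. eapply Rle_trans; [|apply HB]. apply fsum_le. intros; apply H. Qed.

Lemma bsum_plus f g : bsum f -> bsum g -> bsum (fun n => f n + g n).
Proof. intros [B1 H1] [B2 H2]. exists (B1 + B2). intros n. rewrite fsum_plus. specialize (H1 n); specialize (H2 n); lra. Qed.

Lemma bsum_scal c f : 0 <= c -> bsum f -> bsum (fun n => c * f n).
Proof. intros Hc [B1 H1]. exists (c * B1). intros n. rewrite fsum_scal. apply Rmult_le_compat_l; auto. Qed.

Lemma fsum_shift n f : fsum (S n) f = f O + fsum n (fun k => f (S k)).
Proof. replace (S n) with (1 + n)%nat by lia. rewrite fsum_split. simpl. lra. Qed.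

Lemma bsum_shift f : (forall n, 0 <= f n) -> bsum f -> bsum (fun n => f (S n)).
Proof. intros H0 [B1 H1]. exists (B1 - f O). intros n. specialize (H1 (S n)). rewrite fsum_shift in H1. lra. Qed.

Lemma fsum_mono_n f n m : (forall k, 0 <= f k) -> (n <= m)%nat -> fsum n f <= fsum m f.
Proof. intros H Hnm. induction Hnm. lra. simpl. specialize (H m). lra. Qed.

Lemma bsum_infsum f : (forall n, 0 <= f n) -> bsum f -> exists s, infinite_sum f s.
Proof. intros H0 [Bd HB].
  destruct (growing_cv (fun n => sum_f_R0 f n)) as [l Hl].
  - intros n. simpl. specialize (H0 (S n)). lra.
  - exists Bd. intros x [n ->]. rewrite fsum_sum_f_R0. apply HB.
  - exists l. exact Hl. Qed.

Lemma infsum_bsum f s : (forall n, 0 <= f n) -> infinite_sum f s -> bsum f.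
Proof. intros H0 Hs. destruct (Hs 1 ltac:(lra)) as [N0 HN].
  assert (Hb : forall n, (N0 <= n)%nat -> sum_f_R0 f n <= s + 1).
  { intros n Hn. pose proof (HN n Hn). unfold Rdist in H. apply Rlt_le in H. apply Rabs_le_inv in H. lra. }
  exists (s + 1). intros n. destruct n.
  - simpl. pose proof (Hb N0 (le_n _)). rewrite fsum_sum_f_R0 in H.
    assert (0 <= fsum (S N0) f) by (apply fsum_nonneg; auto). lra.
  - rewrite <- fsum_sum_f_R0. destruct (Compare_dec.le_lt_dec N0 n).
    + apply Hb; auto.
    + eapply Rle_trans; [|apply (Hb N0); auto]. rewrite !fsum_sum_f_R0. apply fsum_mono_n; auto. Qed.

Lemma cv0_squeeze f g : (forall n, 0 <= f n <= g n) -> Un_cv g 0 -> Un_cv f 0.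
Proof. intros H Hg eps He. destruct (Hg eps He) as [N0 HN]. exists N0. intros n Hn.
  specialize (HN n Hn). unfold Rdist in *. rewrite Rminus_0_r in *. specialize (H n).
  rewrite Rabs_right in * by lra. lra. Qed.

Lemma cv0_plus f g : Un_cv f 0 -> Un_cv g 0 -> Un_cv (fun n => f n + g n) 0.
Proof. intros Hf Hg eps He. destruct (Hf (eps/2) ltac:(lra)) as [N1 H1]. destruct (Hg (eps/2) ltac:(lra)) as [N2 H2].
  exists (Nat.max N1 N2). intros n Hn. unfold Rdist in *. rewrite Rminus_0_r in *.
  specialize (H1 n ltac:(lia)); specialize (H2 n ltac:(lia)). rewrite Rminus_0_r in *.
  eapply Rle_lt_trans; [apply Rabs_triang|]. lra. Qed.

Lemma cv0_scal c f : Un_cv f 0 -> Un_cv (fun n => c * f n) 0.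
Proof. intros Hf eps He. destruct (Hf (eps / (Rabs c + 1))) as [N1 H1].
  apply Rdiv_lt_0_compat; auto. pose proof (Rabs_pos c); lra.
  exists N1. intros n Hn. specialize (H1 n Hn). unfold Rdist in *. rewrite Rminus_0_r in *. rewrite Rabs_mult.
  pose proof (Rabs_pos c). apply Rle_lt_trans with ((Rabs c + 1) * Rabs (f n)). apply Rmult_le_compat_r; [apply Rabs_pos|lra].
  replace eps with ((Rabs c + 1) * (eps / (Rabs c + 1))) by (field; lra). apply Rmult_lt_compat_l; lra. Qed.

Lemma cv0_const0 : Un_cv (fun _ => 0) 0.
Proof. intros eps He. exists O. intros. unfold Rdist. rewrite Rminus_0_r, Rabs_R0. lra. Qed.

Lemma cv0_fsum m (F : nat -> nat -> R) : (forall k, (k < m)%nat -> Un_cv (F k) 0) ->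
  Un_cv (fun n => fsum m (fun k => F k n)) 0.
Proof. induction m; intros H. simpl. apply cv0_const0.
  simpl. apply cv0_plus. apply IHm; intros; apply H; lia. apply H; lia. Qed.

Lemma cv0_shift f : Un_cv f 0 -> Un_cv (fun n => f (S n)) 0.
Proof. intros Hf eps He. destruct (Hf eps He) as [N1 H1]. exists N1. intros n Hn. apply H1. lia. Qed.

Section Kern.
Variable rho : R.
Hypothesis rho_nn : 0 <= rho.
Hypothesis rho_lt : rho < 1.
Variable W : nat.
Hypothesis W_pos : (1 <= W)%nat.
Definition kr (n : nat) := rho ^ (n / W).

Lemma kr_nn n : 0 <= kr n.
Proof. apply pow_le; auto. Qed.

Lemma kr_le1 n : kr n <= 1.
Proof. unfold kr. rewrite <- (pow1 (n / W)). apply pow_incr; lra. Qed.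

Lemma geom_sum m : fsum m (fun j => rho ^ j) <= 1 / (1 - rho).
Proof. assert (fsum m (fun j => rho ^ j) * (1 - rho) = 1 - rho ^ m).
  { induction m. simpl. ring. change (fsum (S m) (fun j => rho ^ j)) with (fsum m (fun j => rho ^ j) + rho ^ m).
    rewrite Rmult_plus_distr_r, IHm. simpl. ring. }
  assert (0 <= rho ^ m) by (apply pow_le; auto).
  apply Rmult_le_reg_r with (1 - rho). lra. replace (1 / (1 - rho) * (1 - rho)) with 1 by (field; lra). lra. Qed.

Lemma kr_block m : fsum (m * W) kr = INR W * fsum m (fun j => rho ^ j).
Proof. induction m. simpl. ring.
  replace (S m * W)%nat with (m * W + W)%nat by lia. rewrite fsum_split, IHm. change (fsum (S m) (fun j => rho ^ j)) with (fsum m (fun j => rho ^ j) + rho ^ m).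
  rewrite (fsum_ext W _ (fun _ => rho ^ m)). rewrite fsum_const. ring.
  intros k Hk. unfold kr. f_equal. rewrite Nat.add_comm. rewrite Nat.div_add by lia. rewrite Nat.div_small by lia. lia. Qed.

Definition Ksum := INR W * (1 / (1 - rho)).

Lemma kr_bsum n : fsum n kr <= Ksum.
Proof. eapply Rle_trans. apply (fsum_mono_n kr n ((n / W + 1) * W)). apply kr_nn.
  assert (n < (n / W + 1) * W)%nat. { rewrite Nat.mul_add_distr_r. pose proof (Nat.div_mod n W ltac:(lia)).
    pose proof (Nat.mod_upper_bound n W ltac:(lia)). lia. } lia.
  rewrite kr_block. unfold Ksum. apply Rmult_le_compat_l. apply pos_INR. apply geom_sum. Qed.

Lemma kr_cv : Un_cv kr 0.
Proof. intros eps He. destruct (Req_dec rho 0) as [Hr|Hr].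
  - exists W. intros n Hn. unfold Rdist, kr. rewrite Rminus_0_r. rewrite Hr.
    assert (1 <= n / W)%nat. { apply Nat.div_le_lower_bound; lia. }
    destruct (n / W)%nat. lia. simpl. rewrite Rmult_0_l, Rabs_R0. lra.
  - destruct (pow_lt_1_zero rho ltac:(rewrite Rabs_right; lra) eps He) as [N1 H1].
    exists (N1 * W)%nat. intros n Hn. unfold Rdist, kr. rewrite Rminus_0_r. apply H1.
    apply Nat.div_le_lower_bound; lia. Qed.
End Kern.

Lemma fsum_rev m f : fsum m (fun j => f (m - S j)%nat) = fsum m f.
Proof. revert f. induction m; intros f. auto.
  rewrite (fsum_ext (S m) _ (fun j => f (m - j)%nat)) by (intros; f_equal; lia).
  rewrite fsum_shift. replace (m - 0)%nat with m by lia.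
  cbv beta. rewrite IHm. simpl. lra. Qed.

Lemma conv_sum (k b : nat -> R) K T : (forall n, 0 <= k n) -> (forall n, fsum n k <= K) -> (forall n, 0 <= b n) ->
  fsum T (fun t => fsum t (fun s => k (t - s)%nat * b s)) <= K * fsum T b.
Proof. intros Hk HK Hb.
  assert (forall T, fsum T (fun t => fsum t (fun s => k (t - s)%nat * b s)) <= fsum T (fun s => b s * fsum (T - s) k)).
  { induction T0. simpl; lra. cbn [fsum].
    replace (S T0 - T0)%nat with 1%nat by lia. cbn [fsum].
    rewrite (fsum_ext T0 (fun s => b s * fsum (S T0 - s) k) (fun s => b s * fsum (T0 - s) k + k (T0 - s)%nat * b s)).
    2:{ intros s Hs. replace (S T0 - s)%nat with (S (T0 - s)) by lia. simpl. ring. }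
    rewrite fsum_plus. pose proof (Hk O). pose proof (Hb T0). nra. }
  eapply Rle_trans; [apply H|]. rewrite <- fsum_scal. apply fsum_le. intros s Hs.
  rewrite Rmult_comm. apply Rmult_le_compat_r; auto. Qed.

Lemma conv_to0 (k c : nat -> R) K : (forall n, 0 <= k n) -> (forall n, fsum n k <= K) -> Un_cv k 0 ->
  (forall n, 0 <= c n) -> Un_cv c 0 -> Un_cv (fun t => fsum t (fun s => k (t - s)%nat * c s)) 0.
Proof. intros Hk HK Hkc Hc Hcc eps He.
  assert (HK0 : 0 <= K) by (specialize (HK O); simpl in HK; lra).
  destruct (Hcc (eps / (2 * (K + 1)))) as [S0 HS0]. apply Rdiv_lt_0_compat; lra.
  set (C := fsum S0 c + 1). assert (HC : 0 < C) by (unfold C; pose proof (fsum_nonneg S0 c (fun k _ => Hc k)); lra).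
  destruct (Hkc (eps / (2 * C))) as [T0 HT0]. apply Rdiv_lt_0_compat; lra.
  exists (S0 + T0)%nat. intros t Ht. unfold Rdist. rewrite Rminus_0_r.
  rewrite Rabs_right by (apply Rle_ge, fsum_nonneg; intros; apply Rmult_le_pos; auto).
  replace t with (S0 + (t - S0))%nat at 1 by lia. rewrite fsum_split.
  assert (A1 : fsum S0 (fun s => k (t - s)%nat * c s) <= eps / (2 * C) * fsum S0 c).
  { rewrite <- fsum_scal. apply fsum_le. intros s Hs. apply Rmult_le_compat_r; auto.
    specialize (HT0 (t - s)%nat ltac:(lia)). unfold Rdist in HT0. rewrite Rminus_0_r, Rabs_right in HT0 by (apply Rle_ge; auto). lra. }
  assert (A2 : fsum (t - S0) (fun j => k (t - (S0 + j))%nat * c (S0 + j)%nat) <= K * (eps / (2 * (K + 1)))).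
  { eapply Rle_trans with (fsum (t - S0) (fun j => k (t - (S0 + j))%nat * (eps / (2 * (K + 1))))).
    - apply fsum_le. intros j Hj. apply Rmult_le_compat_l; auto.
      specialize (HS0 (S0 + j)%nat ltac:(lia)). unfold Rdist in HS0. rewrite Rminus_0_r, Rabs_right in HS0 by (apply Rle_ge; auto). lra.
    - rewrite fsum_scalr. apply Rmult_le_compat_r. left; apply Rdiv_lt_0_compat; lra.
      rewrite (fsum_ext (t - S0) _ (fun j => (fun i => k (S i)) (t - S0 - S j)%nat)).
      2:{ intros j Hj. f_equal. lia. }
      assert (Hr := fsum_rev (t - S0) (fun i => k (S i))). cbv beta in Hr. rewrite Hr. specialize (HK (S (t - S0))). rewrite fsum_shift in HK. specialize (Hk O). lra. }
  assert (eps / (2 * C) * fsum S0 c <= eps / 2).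
  { replace (eps / 2) with (eps / (2 * C) * C) by (field; lra). apply Rmult_le_compat_l.
    left; apply Rdiv_lt_0_compat; lra. unfold C; lra. }
  assert (K * (eps / (2 * (K + 1))) < eps / 2).
  { replace (eps / 2) with ((K + 1) * (eps / (2 * (K + 1)))) by (field; lra).
    apply Rmult_lt_compat_r. apply Rdiv_lt_0_compat; lra. lra. }
  lra. Qed.

Lemma dec_mono (g : nat -> R) : (forall t, g (S t) <= g t) -> forall s t, (s <= t)%nat -> g t <= g s.
Proof. intros H s t Hst. induction Hst. lra. specialize (H m). lra. Qed.

Lemma gamma_cv (g : nat -> R) : (forall t, 0 < g t) -> (forall t, g (S t) <= g t) -> bsum (fun t => g t ^ 2) -> Un_cv g 0.
Proof. intros Hp Hd [Bd HB] eps He.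
  assert (Hb : forall t, INR (S t) * (g t ^ 2) <= Bd).
  { intros t. eapply Rle_trans; [|apply (HB (S t))]. rewrite <- fsum_const. apply fsum_le.
    intros s Hs. pose proof (dec_mono g Hd s t ltac:(lia)). pose proof (Hp t). simpl. nra. }
  assert (HB0 : 0 <= Bd) by (specialize (Hb O); pose proof (Hp O); simpl in Hb; nra).
  destruct (archimed (Bd / (eps * eps))) as [Hz _].
  assert (0 <= IZR (up (Bd / (eps * eps)))).
  { assert (0 <= Bd / (eps * eps)) by (apply Rmult_le_pos; auto; left; apply Rinv_0_lt_compat; nra). lra. }
  exists (Z.to_nat (up (Bd / (eps * eps)))). intros n Hn. unfold Rdist. rewrite Rminus_0_r.
  rewrite Rabs_right by (apply Rle_ge; left; auto).
  assert (Hn' : Bd / (eps * eps) < INR (S n)).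
  { apply Rlt_le_trans with (IZR (up (Bd / (eps * eps)))); auto.
    rewrite <- (Z2Nat.id (up (Bd / (eps * eps)))). rewrite <- INR_IZR_INZ. apply le_INR. lia.
    apply le_IZR. auto. }
  specialize (Hb n). pose proof (Hp n).
  assert (g n * g n < eps * eps).
  { assert (Bd < INR (S n) * (eps * eps)).
    { apply Rmult_lt_reg_r with (/ (eps * eps)). apply Rinv_0_lt_compat; nra.
      replace (INR (S n) * (eps * eps) * / (eps * eps)) with (INR (S n)) by (field; lra). auto. }
    assert (0 < INR (S n)) by (apply lt_0_INR; lia). replace (g n ^ 2) with (g n * g n) in Hb by ring. nra. }
  nra. Qed.

Lemma finite_bound_R (Q : nat -> R -> Prop) n :
  (forall i M M', Q i M -> M <= M' -> Q i M') ->
  (forall i, (i < n)%nat -> exists M, Q i M) -> exists M, forall i, (i < n)%nat -> Q i M.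
Proof. intros Hm. induction n; intros H. exists 0; intros; lia.
  destruct IHn as [M HM]. intros; apply H; lia.
  destruct (H n) as [M' HM']. lia.
  exists (Rmax M M'). intros i Hi. destruct (Nat.eq_dec i n).
  subst. eapply Hm; eauto; apply Rmax_r. eapply Hm. apply HM; lia. apply Rmax_l. Qed.

Lemma finite_min_pos (g : nat -> R) n : (forall i, (i < n)%nat -> 0 < g i) ->
  exists m, 0 < m /\ forall i, (i < n)%nat -> m <= g i.
Proof. induction n; intros H. exists 1; split; intros; lra || lia.
  destruct IHn as [m [Hm Hmi]]. intros; apply H; lia.
  exists (Rmin m (g n)). split. apply Rmin_glb_lt; auto; apply H; lia.
  intros i Hi. destruct (Nat.eq_dec i n). subst; apply Rmin_r.
  eapply Rle_trans; [apply Rmin_l|apply Hmi; lia]. Qed.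

Section Main.
Variables N B d : nat.
Variable K : nat -> vecd -> Prop.
Variable f : nat -> vecx -> R.
Variable gf : nat -> vecx -> vecx.
Variable r : nat -> vecd -> R.
Variable E : nat -> nat -> Prop.
Variable sel : nat -> nat -> nat.
Variable kappa : R.
Variable a : nat -> nat -> nat -> nat -> R.
Variable ft : nat -> nat -> vecd -> vecx -> R.
Variable gft : nat -> nat -> vecd -> vecx -> vecd.
Variable tau : nat -> R.
Variable gamma : nat -> R.
Variables x y : nat -> nat -> vecx.
Variable phi : nat -> nat -> nat -> R.
Variable xt : nat -> nat -> vecd.
Hypothesis HN : (1 <= N)%nat.
Hypothesis HB : (1 <= B)%nat.
Hypothesis Hd : (1 <= d)%nat.
Hypothesis HKne : forall l, (l < B)%nat -> exists z, K l z.
Hypothesis HKcl : forall l, (l < B)%nat -> closedd d (K l).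
Hypothesis HKcv : forall l, (l < B)%nat -> convexd (K l).
Hypothesis Hf_C1 : forall i, (i < N)%nat -> exists O : vecx -> Prop, openx B d O /\
      (forall z, inK B K z -> O z) /\
      (forall z, O z -> has_gradx B d (f i) (gf i z) z /\ contx_at B d (gf i) z).
Hypothesis Hf_Lip : forall i, (i < N)%nat -> exists L, forall z w, inK B K z -> inK B K w ->
      normx B d (subx (gf i z) (gf i w)) <= L * normx B d (subx z w).
Hypothesis Hf_bd : forall i, (i < N)%nat -> exists M, forall z, inK B K z -> normx B d (gf i z) <= M.
Hypothesis Hr_cvx : forall l, (l < B)%nat -> strongly_convex_on d (fun _ => True) 0 (r l).
Hypothesis Hr_bd : forall l, (l < B)%nat -> exists M, forall z g, K l z -> is_subgrad d (r l) g z ->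
      normd d g <= M.
Hypothesis HU : forall M, exists rho, forall z, inK B K z -> normx B d z >= rho ->
      fsum N (fun i => f i z) + fsum B (fun l => r l (z l)) >= M.
Hypothesis HE_nodes : forall j i, E j i -> (j < N)%nat /\ (i < N)%nat.
Hypothesis HE_sc : forall i j, (i < N)%nat -> (j < N)%nat -> reach E i j.
Hypothesis HE_loop : forall i, (i < N)%nat -> E i i.
Hypothesis Hsel_rng : forall i t, (i < N)%nat -> (sel i t < B)%nat.
Hypothesis Hsel_cyc : forall i, (i < N)%nat -> exists T, (0 < T)%nat /\
      forall t l, (l < B)%nat -> exists s, (s < T)%nat /\ sel i (t + s)%nat = l.
Hypothesis Hkappa : kappa > 0.
Hypothesis Ha_pos : forall l t i j, (l < B)%nat -> (i < N)%nat -> (j < N)%nat ->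
      inEl E sel l t i j -> a l t i j > kappa.
Hypothesis Ha_zero : forall l t i j, (l < B)%nat -> (i < N)%nat -> (j < N)%nat ->
      ~ inEl E sel l t i j -> a l t i j = 0.
Hypothesis Ha_col : forall l t j, (l < B)%nat -> (j < N)%nat ->
      fsum N (fun i => a l t i j) = 1.
Hypothesis Htau : forall i, (i < N)%nat -> tau i > 0.
Hypothesis Hft_C1 : forall i l, (i < N)%nat -> (l < B)%nat -> forall w, inK B K w ->
      forall z, K l z -> has_gradd_on d (K l) (fun u => ft i l u w) (gft i l z w) z /\
                         contd_on d (K l) (fun u => gft i l u w) z.
Hypothesis Hft_sc : forall i l, (i < N)%nat -> (l < B)%nat -> forall w, inK B K w ->
      strongly_convex_on d (K l) (tau i) (fun u => ft i l u w).
Hypothesis Hft_cons : forall i l, (i < N)%nat -> (l < B)%nat -> forall w, inK B K w ->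
      forall k, (k < d)%nat -> gft i l (w l) w k = gf i w l k.
Hypothesis Hft_Lip : forall i l, (i < N)%nat -> (l < B)%nat -> exists L, forall z w w',
      K l z -> inK B K w -> inK B K w' ->
      normd d (subd (gft i l z w) (gft i l z w')) <= L * normx B d (subx w w').
Hypothesis Hg_pos : forall t, 0 < gamma t <= 1.
Hypothesis Hg_dec : forall t, gamma (S t) <= gamma t.
Hypothesis Hg_div : cv_infty (fun n => sum_f_R0 gamma n).
Hypothesis Hg_sq : exists s, infinite_sum (fun t => (gamma t)^2) s.
Hypothesis Hx0 : forall i, (i < N)%nat -> inK B K (x O i).
Hypothesis Hy0 : forall i l k, (i < N)%nat -> (l < B)%nat -> (k < d)%nat ->
      y O i l k = gf i (x O i) l k.
Hypothesis Hphi0 : forall i l, (i < N)%nat -> (l < B)%nat -> phi O i l = 1.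
Hypothesis Hxt_K : forall t i, (i < N)%nat -> K (sel i t) (xt t i).
Hypothesis Hxt_min : forall t i, (i < N)%nat -> forall z, K (sel i t) z ->
      fhat N d ft gf i (sel i t) (xt t i) (x t i) (y t i (sel i t)) + r (sel i t) (xt t i)
      <= fhat N d ft gf i (sel i t) z (x t i) (y t i (sel i t)) + r (sel i t) z.
Hypothesis Hphi : forall t i l, (i < N)%nat -> (l < B)%nat ->
      phi (S t) i l = fsum N (fun j => a l t i j * phi t j l).
Hypothesis Hx : forall t i l k, (i < N)%nat -> (l < B)%nat -> (k < d)%nat ->
      x (S t) i l k = fsum N (fun j => a l t i j * phi t j l / phi (S t) i l *
                        (x t j l k + gamma t * dx sel xt x t j l k)).
Hypothesis Hy : forall t i l k, (i < N)%nat -> (l < B)%nat -> (k < d)%nat ->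
      y (S t) i l k = fsum N (fun j => a l t i j / phi (S t) i l *
                        (phi t j l * y t j l k + gf j (x (S t) j) l k - gf j (x t j) l k)).

Lemma a_nn l t i j : (l < B)%nat -> (i < N)%nat -> (j < N)%nat -> 0 <= a l t i j.
Proof. intros. destruct (classic (inEl E sel l t i j)).
  pose proof (Ha_pos l t i j H H0 H1 H2); lra. rewrite Ha_zero; auto; lra. Qed.

Lemma a_diag l t i : (l < B)%nat -> (i < N)%nat -> kappa <= a l t i i.
Proof. intros. left. apply Ha_pos; auto. split; auto. Qed.

Lemma a_edge l t i j : (l < B)%nat -> E j i -> sel j t = l -> kappa <= a l t i j.
Proof. intros Hl He Hs. destruct (HE_nodes j i He). left. apply Ha_pos; auto. split; auto. Qed.

Lemma Tm_unif : exists Tm, forall j, (j < N)%nat -> forall t l, (l < B)%nat -> exists s, (s < Tm)%nat /\ sel j (t + s)%nat = l.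
Proof. apply finite_choice.
  - intros j w w' H Hw t l Hl. destruct (H t l Hl) as [s [Hs Hsl]]. exists s; split; auto; lia.
  - intros j Hj. destruct (Hsel_cyc j Hj) as [T [_ HT]]. exists T. auto. Qed.

Lemma W_unif : exists W, (1 <= W)%nat /\ forall l, (l < B)%nat -> forall s i j, (i < N)%nat -> (j < N)%nat ->
  kappa ^ W <= P N (a l) s W i j.
Proof. destruct Tm_unif as [Tm HTm].
  assert (exists w, forall l, (l < B)%nat -> forall n s i j, (w <= n)%nat -> (i < N)%nat -> (j < N)%nat ->
     kappa ^ n <= P N (a l) s n i j) as [w Hw].
  { apply finite_choice.
    - intros l w w' H Hle n s i j Hn Hi Hj. apply H; auto; lia.
    - intros l Hl. destruct (P_window N (a l) (fun t i j Hi Hj => a_nn l t i j Hl Hi Hj) kappa ltac:(lra)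
        (fun t i Hi => a_diag l t i Hl Hi) E (fun j t => sel j t = l) HE_nodes
        (fun t i j He Hs => a_edge l t i j Hl He Hs) Tm (fun j t Hj => HTm j Hj t l Hl) HE_sc) as [W [HW HWw]].
      exists W. intros; apply HWw; auto. }
  exists (S w). split. lia. intros. apply Hw; auto; lia. Qed.

Lemma K_inv l z z' : (l < B)%nat -> K l z -> (forall k, (k < d)%nat -> z k = z' k) -> K l z'.
Proof. intros Hl Hz He. apply (HKcl l Hl (fun _ => z) z'). auto.
  intros eps Heps. exists O. intros. unfold Rdist. rewrite normd_zero. rewrite Rminus_0_r, Rabs_R0; lra.
  intros k Hk. unfold subd. rewrite He; auto; ring. Qed.

Lemma phi_pos t i l : (i < N)%nat -> (l < B)%nat -> 0 < phi t i l.
Proof. revert i. induction t; intros i Hi Hl. rewrite Hphi0; auto; lra.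
  rewrite Hphi by auto. apply Rlt_le_trans with (a l t i i * phi t i l).
  apply Rmult_lt_0_compat; auto. pose proof (a_diag l t i Hl Hi); lra.
  apply (fsum_term N (fun j => a l t i j * phi t j l)); auto.
  intros j Hj. apply Rmult_le_pos. apply a_nn; auto. left; apply IHt; auto. Qed.

Lemma conv_K (S : vecd -> Prop) (Sinv : forall z z', S z -> (forall k, (k < d)%nat -> z k = z' k) -> S z') :
  convexd S -> forall n (p : nat -> vecd) (w : nat -> R) (q : vecd),
  (forall j, (j < n)%nat -> S (p j)) -> (forall j, (j < n)%nat -> 0 <= w j) -> fsum n w = 1 ->
  (forall k, (k < d)%nat -> q k = fsum n (fun j => w j * p j k)) -> S q.
Proof. intros Hc n. induction n; intros p w q Hp Hw Hs Hq. simpl in Hs; lra.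
  simpl in Hs. destruct (Req_dec (w n) 1) as [H1|H1].
  - assert (Hz : forall j, (j < n)%nat -> w j = 0).
    { intros j Hj. assert (0 <= w j) by (apply Hw; lia).
      assert (w j <= fsum n w) by (apply (fsum_term n w j); auto; intros; apply Hw; lia). lra. }
    apply (Sinv (p n)). apply Hp; lia. intros k Hk. rewrite Hq by auto. simpl.
    rewrite fsum_zero. rewrite H1; ring. intros j Hj; rewrite Hz; auto; ring.
  - assert (Hw1 : w n < 1). { assert (0 <= fsum n w) by (apply fsum_nonneg; intros; apply Hw; lia). lra. }
    set (q' := fun k => fsum n (fun j => w j / (1 - w n) * p j k)).
    assert (Sq' : S q').
    { apply (IHn p (fun j => w j / (1 - w n))). intros; apply Hp; lia.
      intros j Hj. apply Rmult_le_pos. apply Hw; lia. left; apply Rinv_0_lt_compat; lra.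
      unfold Rdiv. rewrite fsum_scalr. replace (fsum n w) with (1 - w n) by lra. field. lra. intros; auto. }
    apply (Sinv (combd (w n) (p n) q')). apply Hc; [apply Hp; lia | exact Sq' | split; [apply Hw; lia|lra]].
    intros k Hk. rewrite Hq by auto. simpl. unfold combd, q'. rewrite <- fsum_scal.
    rewrite (fsum_ext n (fun j => (1 - w n) * (w j / (1 - w n) * p j k)) (fun j => w j * p j k)). ring.
    intros; field; lra. Qed.

Lemma phiS_sum t i l : (i < N)%nat -> (l < B)%nat ->
  fsum N (fun j => a l t i j * phi t j l / phi (S t) i l) = 1.
Proof. intros. unfold Rdiv. rewrite fsum_scalr. rewrite <- Hphi by auto. field.
  pose proof (phi_pos (S t) i l H H0). lra. Qed.

Lemma x_in_K t i : (i < N)%nat -> inK B K (x t i).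
Proof. revert i. induction t; intros i Hi. apply Hx0; auto.
  intros l Hl.
  apply (conv_K (K l) (fun z z' Hz He => K_inv l z z' Hl Hz He) (HKcv l Hl) N
     (fun j => fun k => x t j l k + gamma t * dx sel xt x t j l k) (fun j => a l t i j * phi t j l / phi (S t) i l)).
  - intros j Hj. unfold dx. destruct (Nat.eqb_spec l (sel j t)).
    + apply (K_inv l (combd (gamma t) (xt t j) (x t j l))); auto.
      apply (HKcv l Hl). rewrite e. apply Hxt_K; auto. apply IHt; auto. pose proof (Hg_pos t); lra.
      intros k Hk. unfold combd. ring.
    + apply (K_inv l (x t j l)); auto. apply IHt; auto. intros; ring.
  - intros j Hj. apply Rmult_le_pos. apply Rmult_le_pos. apply a_nn; auto. left; apply phi_pos; auto.
    left; apply Rinv_0_lt_compat; apply phi_pos; auto.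
  - apply phiS_sum; auto.
  - intros k Hk. rewrite Hx by auto. auto. Qed.


Variable W : nat.
Hypothesis HW1 : (1 <= W)%nat.
Hypothesis HWw : forall l, (l < B)%nat -> forall s i j, (i < N)%nat -> (j < N)%nat -> kappa ^ W <= P N (a l) s W i j.
Variables Mg L Mr tm : R.
Hypothesis HMg : forall j z, (j < N)%nat -> inK B K z -> normx B d (gf j z) <= Mg.
Hypothesis HL0 : 0 <= L.
Hypothesis HL : forall j z w, (j < N)%nat -> inK B K z -> inK B K w ->
  normx B d (subx (gf j z) (gf j w)) <= L * normx B d (subx z w).
Hypothesis HMr : forall l z g, (l < B)%nat -> K l z -> is_subgrad d (r l) g z -> normd d g <= Mr.
Hypothesis Htm0 : 0 < tm.
Hypothesis Htm : forall i, (i < N)%nat -> tm <= tau i.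

Definition eta := kappa ^ W.
Definition rh := rho N kappa W.
Definition kn := kr rh W.
Definition KS := Ksum rh W.

Lemma eta_pos : 0 < eta.
Proof. apply pow_lt; lra. Qed.

Lemma rh_bounds : 0 <= rh < 1.
Proof. unfold rh, rho. assert (HNr : 1 <= INR N) by (apply (le_INR 1); lia). pose proof eta_pos. unfold eta in H.
  split; [|nra]. assert (INR N * kappa ^ W <= 1).
  { rewrite <- (P_col N (a 0%nat) (fun t j Hj => Ha_col 0 t j ltac:(lia) Hj) 0 W 0) by lia.
    rewrite <- fsum_const. apply fsum_le. intros; apply HWw; auto; lia. } lra. Qed.

Lemma kn_nn n : 0 <= kn n.
Proof. apply kr_nn. apply rh_bounds. Qed.
Lemma kn_le1 n : kn n <= 1.
Proof. apply kr_le1; apply rh_bounds. Qed.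
Lemma kn_bsum n : fsum n kn <= KS.
Proof. apply kr_bsum; auto; apply rh_bounds. Qed.
Lemma kn_cv : Un_cv kn 0.
Proof. apply kr_cv; auto; apply rh_bounds. Qed.
Lemma KS_nn : 0 <= KS.
Proof. pose proof (kn_bsum O). simpl in H. lra. Qed.

Lemma kn_conv_le t c : 0 <= c -> fsum t (fun s => kn (t - s)%nat * c) <= KS * c.
Proof. intros Hc. rewrite fsum_scalr. apply Rmult_le_compat_r; auto.
  rewrite (fsum_ext t _ (fun s => (fun i => kn (S i)) (t - S s)%nat)) by (intros; f_equal; lia).
  assert (Hr := fsum_rev t (fun i => kn (S i))). cbv beta in Hr. rewrite Hr.
  pose proof (kn_bsum (S t)). rewrite fsum_shift in H. pose proof (kn_nn O). lra. Qed.

Lemma phi_le t i l : (i < N)%nat -> (l < B)%nat -> phi t i l <= INR N.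
Proof. intros. rewrite <- (phi_sum N (a l) (fun t j Hj => Ha_col l t j H0 Hj)
   (fun t i => phi t i l) (fun i Hi => Hphi0 i l Hi H0) (fun t i Hi => Hphi t i l Hi H0) t).
  apply (fsum_term N (fun i => phi t i l)); auto. intros; left; apply phi_pos; auto. Qed.

Lemma push l (u e : nat -> nat -> R) : (l < B)%nat ->
  (forall t i, (i < N)%nat -> u (S t) i = fsum N (fun j => a l t i j * (u t j + e t j))) ->
  forall t i, (i < N)%nat ->
  Rabs (u t i / phi t i l - fsum N (fun j => u t j) / INR N) <=
  (kn t * fsum N (fun j => Rabs (u O j)) + fsum t (fun s => kn (t - s)%nat * fsum N (fun j => Rabs (e s j)))) / eta.
Proof. intros Hl Hu t i Hi.
  pose proof (u_dev N HN (a l) (fun t i j Hi Hj => a_nn l t i j Hl Hi Hj) (fun t j Hj => Ha_col l t j Hl Hj)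
    kappa W HW1 (HWw l Hl) (fun t i => phi t i l) (fun i Hi => Hphi0 i l Hi Hl) (fun t i Hi => Hphi t i l Hi Hl)
    u e Hu t i Hi (proj1 rh_bounds)) as H.
  fold rh in H. change (kern N kappa W) with kn in H.
  pose proof (phi_lb N HN (a l) (fun t i j Hi Hj => a_nn l t i j Hl Hi Hj) (fun t j Hj => Ha_col l t j Hl Hj)
    kappa ltac:(lra) (fun t i Hi => a_diag l t i Hl Hi) W HW1 (HWw l Hl) (fun t i => phi t i l) (fun i Hi => Hphi0 i l Hi Hl) (fun t i Hi => Hphi t i l Hi Hl) t i Hi) as Hlb.
  cbv beta in Hlb. fold eta in Hlb. pose proof eta_pos.
  assert (HNp : 0 < INR N) by (apply lt_0_INR; lia).
  replace (u t i / phi t i l - fsum N (fun j => u t j) / INR N) with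
    ((u t i - phi t i l * fsum N (fun j => u t j) / INR N) / phi t i l) by (field; lra).
  set (X := u t i - phi t i l * fsum N (fun j => u t j) / INR N) in *.
  set (R0 := kn t * fsum N (fun j => Rabs (u O j)) + fsum t (fun s => kn (t - s)%nat * fsum N (fun j => Rabs (e s j)))) in *.
  assert (HR0 : 0 <= R0) by (pose proof (Rabs_pos X); lra).
  assert (Hp : 0 < phi t i l) by lra.
  apply Rmult_le_reg_r with (phi t i l); auto.
  replace (Rabs (X / phi t i l) * phi t i l) with (Rabs X).
  2:{ rewrite <- (Rabs_right (phi t i l)) at 2 by lra. rewrite <- Rabs_mult. f_equal. field. lra. }
  apply Rle_trans with R0; auto. apply Rle_trans with (R0 / eta * eta). right; field; lra.
  apply Rmult_le_compat_l; auto. apply Rmult_le_pos; auto. left; apply Rinv_0_lt_compat; lra. Qed.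

Definition uy l k t i := phi t i l * y t i l k.
Definition ey l k t j := gf j (x (S t) j) l k - gf j (x t j) l k.

Lemma uy_rec l k : (l < B)%nat -> (k < d)%nat -> forall t i, (i < N)%nat ->
  uy l k (S t) i = fsum N (fun j => a l t i j * (uy l k t j + ey l k t j)).
Proof. intros Hl Hk t i Hi. unfold uy, ey. rewrite Hy by auto. rewrite <- fsum_scal. apply fsum_ext.
  intros j Hj. pose proof (phi_pos (S t) i l Hi Hl). field. lra. Qed.

Lemma uy_sum l k : (l < B)%nat -> (k < d)%nat -> forall t,
  fsum N (fun j => uy l k t j) = fsum N (fun j => gf j (x t j) l k).
Proof. intros Hl Hk t. induction t.
  - apply fsum_ext. intros j Hj. unfold uy. rewrite Hphi0, Hy0 by auto. ring.
  - rewrite (fsum_ext N _ (fun i => fsum N (fun j => a l t i j * (uy l k t j + ey l k t j)))) by (intros; apply uy_rec; auto).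
    rewrite fsum_swap. rewrite (fsum_ext N _ (fun j => uy l k t j + ey l k t j)).
    rewrite fsum_plus. unfold ey. rewrite fsum_minus. rewrite <- IHt. change (fsum N (uy l k t)) with (fsum N (fun j => uy l k t j)). ring.
    intros j Hj. rewrite fsum_scalr, Ha_col; auto; ring. Qed.

Lemma gf_coord j z l k : (j < N)%nat -> inK B K z -> (l < B)%nat -> (k < d)%nat -> Rabs (gf j z l k) <= Mg.
Proof. intros. eapply Rle_trans; [apply (normx_coord B d); auto|apply HMg; auto]. Qed.

Lemma Mg_nn : 0 <= Mg.
Proof. pose proof (HMg 0 (x O 0) ltac:(lia) (x_in_K O 0 ltac:(lia))). pose proof (normx_nonneg B d (gf 0%nat (x O 0%nat))). lra. Qed.

Definition Yc := Mg + (INR N * Mg + KS * (2 * INR N * Mg)) / eta.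

Lemma y_coord_bound t i l k : (i < N)%nat -> (l < B)%nat -> (k < d)%nat -> Rabs (y t i l k) <= Yc.
Proof. intros Hi Hl Hk.
  pose proof (push l (uy l k) (ey l k) Hl (uy_rec l k Hl Hk) t i Hi) as H.
  rewrite uy_sum in H by auto.
  replace (uy l k t i / phi t i l) with (y t i l k) in H by (unfold uy; pose proof (phi_pos t i l Hi Hl); field; lra).
  assert (HNp : 0 < INR N) by (apply lt_0_INR; lia). pose proof eta_pos. pose proof Mg_nn. pose proof KS_nn.
  assert (A1 : fsum N (fun j => Rabs (uy l k O j)) <= INR N * Mg).
  { rewrite <- fsum_const. apply fsum_le. intros j Hj. unfold uy. rewrite Hphi0, Hy0 by auto. rewrite Rmult_1_l.
    apply gf_coord; auto. }
  assert (A2 : forall s, fsum N (fun j => Rabs (ey l k s j)) <= 2 * INR N * Mg).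
  { intros s. replace (2 * INR N * Mg) with (INR N * (2 * Mg)) by ring. rewrite <- fsum_const. apply fsum_le.
    intros j Hj. unfold ey. eapply Rle_trans; [apply Rabs_triang|]. rewrite Rabs_Ropp.
    pose proof (gf_coord j (x (S s) j) l k Hj (x_in_K _ _ Hj) Hl Hk). pose proof (gf_coord j (x s j) l k Hj (x_in_K _ _ Hj) Hl Hk). lra. }
  assert (A3 : fsum t (fun s => kn (t - s)%nat * fsum N (fun j => Rabs (ey l k s j))) <= KS * (2 * INR N * Mg)).
  { eapply Rle_trans; [|apply kn_conv_le; nra]. apply fsum_le. intros s Hs. apply Rmult_le_compat_l. apply kn_nn. auto. }
  assert (A4 : kn t * fsum N (fun j => Rabs (uy l k O j)) <= INR N * Mg).
  { pose proof (kn_le1 t). pose proof (kn_nn t). assert (0 <= fsum N (fun j => Rabs (uy l k O j))) by (apply fsum_nonneg; intros; apply Rabs_pos). nra. }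
  assert (A5 : Rabs (fsum N (fun j => gf j (x t j) l k) / INR N) <= Mg).
  { unfold Rdiv. rewrite Rabs_mult, (Rabs_right (/ INR N)) by (apply Rle_ge; left; apply Rinv_0_lt_compat; lra).
    apply Rmult_le_reg_r with (INR N); auto. rewrite Rmult_assoc, Rinv_l, Rmult_1_r by lra.
    eapply Rle_trans; [apply fsum_abs|]. rewrite Rmult_comm, <- fsum_const. apply fsum_le. intros j Hj. apply gf_coord; auto. apply x_in_K; auto. }
  unfold Yc.
  assert (Rabs (y t i l k - fsum N (fun j => gf j (x t j) l k) / INR N) <= (INR N * Mg + KS * (2 * INR N * Mg)) / eta).
  { eapply Rle_trans; [apply H|]. unfold Rdiv. apply Rmult_le_compat_r. left; apply Rinv_0_lt_compat; lra. lra. }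
  pose proof (Rabs_triang (y t i l k - fsum N (fun j => gf j (x t j) l k) / INR N) (fsum N (fun j => gf j (x t j) l k) / INR N)) as Htr.
  replace (y t i l k - fsum N (fun j => gf j (x t j) l k) / INR N + fsum N (fun j => gf j (x t j) l k) / INR N) with (y t i l k) in Htr by ring.
  lra. Qed.

Lemma Yc_nn : 0 <= Yc.
Proof. pose proof (y_coord_bound O 0 0 0 ltac:(lia) ltac:(lia) ltac:(lia)). pose proof (Rabs_pos (y O 0%nat 0%nat 0%nat)). lra. Qed.

Lemma normd_y t i l : (i < N)%nat -> (l < B)%nat -> normd d (y t i l) <= INR d * Yc.
Proof. intros. eapply Rle_trans; [apply normd_le_l1|]. rewrite <- fsum_const. apply fsum_le. intros; apply y_coord_bound; auto. Qed.

Definition Dx := (INR N * (INR d * Yc) + Mr) / tm.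

Lemma dx_sub_bound t i : (i < N)%nat -> normd d (subd (x t i (sel i t)) (xt t i)) <= Dx.
Proof. intros Hi. set (l := sel i t). assert (Hl : (l < B)%nat) by (apply Hsel_rng; auto).
  pose proof (min_bound d (K l) (fun u => ft i l u (x t i)) (fun z => gft i l z (x t i)) (r l) (tau i) Mr
    (Htau i Hi) (HKcv l Hl) (fun z z' Hz He => K_inv l z z' Hl Hz He)
    (fun z Hz => proj1 (Hft_C1 i l Hi Hl (x t i) (x_in_K t i Hi) z Hz))
    (Hft_sc i l Hi Hl (x t i) (x_in_K t i Hi)) (Hr_cvx l Hl) (fun z g Hz Hg => HMr l z g Hl Hz Hg)
    (fun k => INR N * y t i l k - gf i (x t i) l k) (x t i l) (xt t i) (x_in_K t i Hi l Hl) (Hxt_K t i Hi)) as H.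
  assert (Hmin : forall z, K l z -> ft i l (xt t i) (x t i) + ipd d (fun k => INR N * y t i l k - gf i (x t i) l k) (subd (xt t i) (x t i l)) + r l (xt t i) <=
     ft i l z (x t i) + ipd d (fun k => INR N * y t i l k - gf i (x t i) l k) (subd z (x t i l)) + r l z).
  { intros z Hz. pose proof (Hxt_min t i Hi z Hz). unfold fhat in H0. fold l in H0. lra. }
  specialize (H Hmin). cbv beta in H.
  rewrite (normd_ext d (fun k => gft i l (x t i l) (x t i) k + (INR N * y t i l k - gf i (x t i) l k)) (fun k => INR N * y t i l k)) in H.
  2:{ intros k Hk. rewrite Hft_cons; auto. ring. apply x_in_K; auto. }
  rewrite (normd_scale d (INR N) (y t i l)) in H by apply pos_INR.
  pose proof (normd_y t i l Hi Hl). pose proof (Htm i Hi). pose proof (Htau i Hi).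
  pose proof (normd_nonneg d (subd (x t i l) (xt t i))). pose proof (pos_INR N).
  assert (HH : tau i * normd d (subd (x t i l) (xt t i)) <= INR N * (INR d * Yc) + Mr).
  { assert (INR N * normd d (y t i l) <= INR N * (INR d * Yc)) by (apply Rmult_le_compat_l; auto). lra. }
  unfold Dx. apply Rmult_le_reg_l with tm; auto.
  replace (tm * ((INR N * (INR d * Yc) + Mr) / tm)) with (INR N * (INR d * Yc) + Mr) by (field; lra).
  assert (tm * normd d (subd (x t i l) (xt t i)) <= tau i * normd d (subd (x t i l) (xt t i))) by (apply Rmult_le_compat_r; auto).
  lra. Qed.

Lemma dx_bound t i l k : (i < N)%nat -> (k < d)%nat -> Rabs (dx sel xt x t i l k) <= Dx.
Proof. intros Hi Hk. pose proof (dx_sub_bound t i Hi). unfold dx. destruct (Nat.eqb_spec l (sel i t)).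
  - subst l. eapply Rle_trans; [|apply H]. rewrite Rabs_minus_sym. apply (normd_coord d (subd (x t i (sel i t)) (xt t i)) k Hk).
  - rewrite Rabs_R0. pose proof (normd_nonneg d (subd (x t i (sel i t)) (xt t i))). lra. Qed.

Lemma Dx_nn : 0 <= Dx.
Proof. pose proof (dx_bound O 0 0 0 ltac:(lia) ltac:(lia)). pose proof (Rabs_pos (dx sel xt x O 0%nat 0%nat 0%nat)). lra. Qed.

Definition ux l k t i := phi t i l * x t i l k.
Definition ex l k t j := gamma t * phi t j l * dx sel xt x t j l k.

Lemma ux_rec l k : (l < B)%nat -> (k < d)%nat -> forall t i, (i < N)%nat ->
  ux l k (S t) i = fsum N (fun j => a l t i j * (ux l k t j + ex l k t j)).
Proof. intros Hl Hk t i Hi. unfold ux, ex. rewrite Hx by auto. rewrite <- fsum_scal. apply fsum_ext.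
  intros j Hj. pose proof (phi_pos (S t) i l Hi Hl). field. lra. Qed.

Lemma ux_sum l k : (l < B)%nat -> (k < d)%nat -> forall t,
  fsum N (fun j => ux l k (S t) j) = fsum N (fun j => ux l k t j) + fsum N (fun j => ex l k t j).
Proof. intros Hl Hk t.
  rewrite (fsum_ext N _ (fun i => fsum N (fun j => a l t i j * (ux l k t j + ex l k t j)))) by (intros; apply ux_rec; auto).
  rewrite fsum_swap. rewrite (fsum_ext N _ (fun j => ux l k t j + ex l k t j)). apply fsum_plus.
  intros j Hj. rewrite fsum_scalr, Ha_col; auto; ring. Qed.

Lemma ex_bound l k t j : (l < B)%nat -> (k < d)%nat -> (j < N)%nat -> Rabs (ex l k t j) <= gamma t * (INR N * Dx).
Proof. intros. unfold ex. rewrite !Rabs_mult. pose proof (Hg_pos t).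
  rewrite (Rabs_right (gamma t)) by lra. rewrite (Rabs_right (phi t j l)) by (left; apply phi_pos; auto).
  rewrite Rmult_assoc. apply Rmult_le_compat_l. lra. apply Rmult_le_compat. left; apply phi_pos; auto. apply Rabs_pos.
  apply phi_le; auto. apply dx_bound; auto. Qed.

Definition C0x := fsum B (fun l => fsum d (fun k => fsum N (fun j => Rabs (x O j l k)))).
Definition C0y := fsum B (fun l => fsum d (fun k => fsum N (fun j => Rabs (gf j (x O j) l k)))).

Lemma C0_term (F : nat -> nat -> nat -> R) l k : (l < B)%nat -> (k < d)%nat ->
  fsum N (fun j => Rabs (F l k j)) <= fsum B (fun l => fsum d (fun k => fsum N (fun j => Rabs (F l k j)))).
Proof. intros. eapply Rle_trans; [|apply (fsum_term B (fun l => fsum d (fun k => fsum N (fun j => Rabs (F l k j)))) l)]; auto.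
  apply (fsum_term d (fun k => fsum N (fun j => Rabs (F l k j))) k); auto.
  intros; apply fsum_nonneg; intros; apply Rabs_pos.
  intros; apply fsum_nonneg; intros; apply fsum_nonneg; intros; apply Rabs_pos. Qed.

Definition dis t := (kn t * C0x + INR N * INR N * Dx * fsum t (fun s => kn (t - s)%nat * gamma s)) / eta.

Lemma x_dev l k t i : (l < B)%nat -> (k < d)%nat -> (i < N)%nat ->
  Rabs (x t i l k - fsum N (fun j => ux l k t j) / INR N) <= dis t.
Proof. intros Hl Hk Hi. pose proof (push l (ux l k) (ex l k) Hl (ux_rec l k Hl Hk) t i Hi) as H.
  replace (ux l k t i / phi t i l) with (x t i l k) in H by (unfold ux; pose proof (phi_pos t i l Hi Hl); field; lra).
  eapply Rle_trans; [apply H|]. unfold dis, Rdiv. apply Rmult_le_compat_r. left; apply Rinv_0_lt_compat, eta_pos.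
  apply Rplus_le_compat. apply Rmult_le_compat_l. apply kn_nn.
  rewrite (fsum_ext N _ (fun j => Rabs (x O j l k))). apply (C0_term (fun l k j => x O j l k)); auto.
  intros j Hj. unfold ux. rewrite Hphi0 by auto. f_equal; ring.
  rewrite <- fsum_scal. apply fsum_le. intros s Hs.
  replace (INR N * INR N * Dx * (kn (t - s)%nat * gamma s)) with (kn (t - s)%nat * (INR N * (gamma s * (INR N * Dx)))) by ring.
  apply Rmult_le_compat_l. apply kn_nn. rewrite <- fsum_const. apply fsum_le. intros; apply ex_bound; auto. Qed.

Definition cc t := dis (S t) + dis t + gamma t * (INR N * Dx).

Lemma x_step l k t i : (l < B)%nat -> (k < d)%nat -> (i < N)%nat -> Rabs (x (S t) i l k - x t i l k) <= cc t.
Proof. intros Hl Hk Hi. pose proof (x_dev l k (S t) i Hl Hk Hi). pose proof (x_dev l k t i Hl Hk Hi).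
  rewrite ux_sum in H by auto.
  assert (HNp : 0 < INR N) by (apply lt_0_INR; lia).
  assert (Rabs (fsum N (fun j => ex l k t j) / INR N) <= gamma t * (INR N * Dx)).
  { unfold Rdiv. rewrite Rabs_mult, (Rabs_right (/ INR N)) by (apply Rle_ge; left; apply Rinv_0_lt_compat; lra).
    apply Rmult_le_reg_r with (INR N); auto. rewrite Rmult_assoc, Rinv_l, Rmult_1_r by lra.
    eapply Rle_trans; [apply fsum_abs|]. rewrite Rmult_comm, <- fsum_const. apply fsum_le. intros; apply ex_bound; auto. }
  set (U := fsum N (fun j => ux l k t j)) in *. set (V := fsum N (fun j => ex l k t j)) in *.
  replace (x (S t) i l k - x t i l k) with ((x (S t) i l k - (U + V) / INR N) - (x t i l k - U / INR N) + V / INR N) by (field; lra).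
  unfold cc. eapply Rle_trans; [apply Rabs_triang|]. eapply Rle_trans; [apply Rplus_le_compat_r, Rabs_triang|].
  rewrite Rabs_Ropp. lra. Qed.

Lemma cc_nn t : 0 <= cc t.
Proof. pose proof (x_step 0 0 t 0 ltac:(lia) ltac:(lia) ltac:(lia)). pose proof (Rabs_pos (x (S t) 0%nat 0%nat 0%nat - x t 0%nat 0%nat 0%nat)). lra. Qed.

Lemma x_step_normx t j : (j < N)%nat -> normx B d (subx (x (S t) j) (x t j)) <= INR B * (INR d * cc t).
Proof. intros Hj. eapply Rle_trans; [apply normx_le_l1|]. rewrite <- fsum_const. apply fsum_le. intros l Hl.
  rewrite <- fsum_const. apply fsum_le. intros k Hk. unfold subx. apply x_step; auto. Qed.

Lemma ey_bound l k t j : (l < B)%nat -> (k < d)%nat -> (j < N)%nat -> Rabs (ey l k t j) <= L * (INR B * (INR d * cc t)).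
Proof. intros. unfold ey. eapply Rle_trans. apply (normx_coord B d (subx (gf j (x (S t) j)) (gf j (x t j))) l k); auto.
  eapply Rle_trans. apply HL; auto; apply x_in_K; auto. apply Rmult_le_compat_l; auto. apply x_step_normx; auto. Qed.

Definition err t := (kn t * C0y + INR N * L * INR B * INR d * fsum t (fun s => kn (t - s)%nat * cc s)) / eta.

Lemma y_dev l k t i : (l < B)%nat -> (k < d)%nat -> (i < N)%nat ->
  Rabs (y t i l k - / INR N * fsum N (fun j => gf j (x t j) l k)) <= err t.
Proof. intros Hl Hk Hi. pose proof (push l (uy l k) (ey l k) Hl (uy_rec l k Hl Hk) t i Hi) as H.
  rewrite uy_sum in H by auto.
  replace (uy l k t i / phi t i l) with (y t i l k) in H by (unfold uy; pose proof (phi_pos t i l Hi Hl); field; lra).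
  assert (HNp : 0 < INR N) by (apply lt_0_INR; lia).
  replace (/ INR N * fsum N (fun j => gf j (x t j) l k)) with (fsum N (fun j => gf j (x t j) l k) / INR N) by (field; lra).
  eapply Rle_trans; [apply H|]. unfold err, Rdiv. apply Rmult_le_compat_r. left; apply Rinv_0_lt_compat, eta_pos.
  apply Rplus_le_compat. apply Rmult_le_compat_l. apply kn_nn.
  rewrite (fsum_ext N _ (fun j => Rabs (gf j (x O j) l k))). apply (C0_term (fun l k j => gf j (x O j) l k)); auto.
  intros j Hj. unfold uy. rewrite Hphi0, Hy0 by auto. f_equal; ring.
  rewrite <- fsum_scal. apply fsum_le. intros s Hs.
  replace (INR N * L * INR B * INR d * (kn (t - s)%nat * cc s)) with (kn (t - s)%nat * (INR N * (L * (INR B * (INR d * cc s))))) by ring.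
  apply Rmult_le_compat_l. apply kn_nn. rewrite <- fsum_const. apply fsum_le. intros; apply ey_bound; auto. Qed.

Lemma track_bound t i : (i < N)%nat -> track_err N B d gf x y t i <= INR B * (INR d * err t).
Proof. intros Hi. unfold track_err. eapply Rle_trans; [apply normx_le_l1|]. rewrite <- fsum_const. apply fsum_le. intros l Hl.
  rewrite <- fsum_const. apply fsum_le. intros k Hk. apply y_dev; auto. Qed.

Lemma cv0_ext (f0 g0 : nat -> R) : (forall n, f0 n = g0 n) -> Un_cv g0 0 -> Un_cv f0 0.
Proof. intros H Hg eps He. destruct (Hg eps He) as [N0 HN0]. exists N0. intros n Hn. rewrite H. auto. Qed.

Lemma gamma_nn t : 0 <= gamma t.
Proof. pose proof (Hg_pos t); lra. Qed.

Lemma bsum_g2 : bsum (fun t => gamma t ^ 2).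
Proof. destruct Hg_sq as [s Hs]. apply (infsum_bsum _ s); auto. intros; apply pow2_ge_0. Qed.

Lemma gamma_to0 : Un_cv gamma 0.
Proof. apply gamma_cv. intros t; apply Hg_pos. apply Hg_dec. apply bsum_g2. Qed.

Lemma convk_to0 c : (forall n, 0 <= c n) -> Un_cv c 0 -> Un_cv (fun t => fsum t (fun s => kn (t - s)%nat * c s)) 0.
Proof. intros. apply (conv_to0 kn c KS); auto. apply kn_nn. apply kn_bsum. apply kn_cv. Qed.

Lemma dis_to0 : Un_cv dis 0.
Proof. apply (cv0_ext _ (fun t => / eta * (C0x * kn t + INR N * INR N * Dx * fsum t (fun s => kn (t - s)%nat * gamma s)))).
  intros n. unfold dis. field. pose proof eta_pos; lra.
  apply cv0_scal. apply cv0_plus. apply cv0_scal, kn_cv. apply cv0_scal. apply convk_to0. apply gamma_nn. apply gamma_to0. Qed.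

Lemma cc_to0 : Un_cv cc 0.
Proof. unfold cc. apply cv0_plus. apply cv0_plus. apply cv0_shift, dis_to0. apply dis_to0.
  apply (cv0_ext _ (fun t => (INR N * Dx) * gamma t)). intros; ring. apply cv0_scal, gamma_to0. Qed.

Lemma err_to0 : Un_cv err 0.
Proof. apply (cv0_ext _ (fun t => / eta * (C0y * kn t + INR N * L * INR B * INR d * fsum t (fun s => kn (t - s)%nat * cc s)))).
  intros n. unfold err. field. pose proof eta_pos; lra.
  apply cv0_scal. apply cv0_plus. apply cv0_scal, kn_cv. apply cv0_scal. apply convk_to0. apply cc_nn. apply cc_to0. Qed.

Lemma conv_nn t c : (forall n, 0 <= c n) -> 0 <= fsum t (fun s => kn (t - s)%nat * c s).
Proof. intros. apply fsum_nonneg. intros. apply Rmult_le_pos; auto. apply kn_nn. Qed.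

Lemma bsum_conv b : (forall n, 0 <= b n) -> bsum b -> bsum (fun t => fsum t (fun s => kn (t - s)%nat * b s)).
Proof. intros Hb [Bd HBd]. exists (KS * Bd). intros T. eapply Rle_trans. apply conv_sum; auto. apply kn_nn. apply kn_bsum.
  apply Rmult_le_compat_l. apply KS_nn. auto. Qed.

Lemma gamma_conv_le t c : (forall n, 0 <= c n) ->
  gamma t * fsum t (fun s => kn (t - s)%nat * c s) <= fsum t (fun s => kn (t - s)%nat * (gamma s * c s)).
Proof. intros Hc. rewrite <- fsum_scal. apply fsum_le. intros s Hs.
  pose proof (dec_mono gamma Hg_dec s t ltac:(lia)). pose proof (kn_nn (t - s)). pose proof (Hc s). pose proof (gamma_nn t).
  replace (kn (t - s)%nat * (gamma s * c s)) with (gamma s * (kn (t - s)%nat * c s)) by ring.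
  apply Rmult_le_compat_r; auto. apply Rmult_le_pos; auto. Qed.

Lemma gamma_conv_le' t c : (forall n, 0 <= c n) ->
  gamma t * fsum (S t) (fun s => kn (S t - s)%nat * c s) <= fsum (S t) (fun s => kn (S t - s)%nat * (gamma s * c s)).
Proof. intros Hc. rewrite <- fsum_scal. apply fsum_le. intros s Hs.
  pose proof (dec_mono gamma Hg_dec s t ltac:(lia)). pose proof (kn_nn (S t - s)). pose proof (Hc s). pose proof (gamma_nn t).
  replace (kn (S t - s)%nat * (gamma s * c s)) with (gamma s * (kn (S t - s)%nat * c s)) by ring.
  apply Rmult_le_compat_r; auto. apply Rmult_le_pos; auto. Qed.

Lemma dis_nn t : 0 <= dis t.
Proof. unfold dis. apply Rmult_le_pos. apply Rplus_le_le_0_compat. apply Rmult_le_pos. apply kn_nn.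
  apply fsum_nonneg; intros; apply fsum_nonneg; intros; apply fsum_nonneg; intros; apply Rabs_pos.
  apply Rmult_le_pos. pose proof (pos_INR N). pose proof Dx_nn. apply Rmult_le_pos; auto. apply Rmult_le_pos; auto.
  apply conv_nn. apply gamma_nn. left; apply Rinv_0_lt_compat, eta_pos. Qed.

Lemma C0x_nn : 0 <= C0x.
Proof. apply fsum_nonneg; intros; apply fsum_nonneg; intros; apply fsum_nonneg; intros; apply Rabs_pos. Qed.
Lemma C0y_nn : 0 <= C0y.
Proof. apply fsum_nonneg; intros; apply fsum_nonneg; intros; apply fsum_nonneg; intros; apply Rabs_pos. Qed.

Lemma bsum_kn : bsum kn.
Proof. exists KS. apply kn_bsum. Qed.

Lemma bsum_gcc : bsum (fun t => gamma t * cc t).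
Proof.
  set (c1 := INR N * INR N * Dx).
  assert (Hc1 : 0 <= c1) by (unfold c1; pose proof (pos_INR N); pose proof Dx_nn; apply Rmult_le_pos; [apply Rmult_le_pos|]; auto).
  pose proof eta_pos. pose proof C0x_nn.
  assert (Hg2 : forall n, 0 <= gamma n ^ 2) by (intros; apply pow2_ge_0).
  apply (bsum_le _ (fun t => / eta * (C0x * kn (S t) + c1 * fsum (S t) (fun s => kn (S t - s)%nat * (gamma s ^ 2)))
     + / eta * (C0x * kn t + c1 * fsum t (fun s => kn (t - s)%nat * (gamma s ^ 2))) + (INR N * Dx) * gamma t ^ 2)).
  - intros t. split. apply Rmult_le_pos. apply gamma_nn. apply cc_nn.
    unfold cc. replace (gamma t * (dis (S t) + dis t + gamma t * (INR N * Dx))) with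
      (gamma t * dis (S t) + gamma t * dis t + (INR N * Dx) * gamma t ^ 2) by ring.
    pose proof (gamma_nn t). pose proof (Hg_pos t).
    apply Rplus_le_compat. apply Rplus_le_compat.
    + unfold dis. replace (gamma t * ((kn (S t) * C0x + INR N * INR N * Dx * fsum (S t) (fun s => kn (S t - s)%nat * gamma s)) / eta))
        with (/ eta * (C0x * (gamma t * kn (S t)) + c1 * (gamma t * fsum (S t) (fun s => kn (S t - s)%nat * gamma s)))) by (unfold c1; field; lra).
      apply Rmult_le_compat_l. left; apply Rinv_0_lt_compat; lra. apply Rplus_le_compat.
      apply Rmult_le_compat_l; auto. pose proof (kn_nn (S t)). nra.
      apply Rmult_le_compat_l; auto. eapply Rle_trans. apply gamma_conv_le'. apply gamma_nn.
      right. apply fsum_ext; intros; ring.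
    + unfold dis. replace (gamma t * ((kn t * C0x + INR N * INR N * Dx * fsum t (fun s => kn (t - s)%nat * gamma s)) / eta))
        with (/ eta * (C0x * (gamma t * kn t) + c1 * (gamma t * fsum t (fun s => kn (t - s)%nat * gamma s)))) by (unfold c1; field; lra).
      apply Rmult_le_compat_l. left; apply Rinv_0_lt_compat; lra. apply Rplus_le_compat.
      apply Rmult_le_compat_l; auto. pose proof (kn_nn t). nra.
      apply Rmult_le_compat_l; auto. eapply Rle_trans. apply gamma_conv_le. apply gamma_nn.
      right. apply fsum_ext; intros; ring.
    + right. ring.
  - apply bsum_plus. apply bsum_plus.
    + apply bsum_scal. left; apply Rinv_0_lt_compat; lra. apply bsum_plus. apply bsum_scal; auto.
      apply bsum_shift. apply kn_nn. apply bsum_kn. apply bsum_scal; auto.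
      apply (bsum_shift (fun t => fsum t (fun s => kn (t - s)%nat * gamma s ^ 2))). intros; apply conv_nn; auto.
      apply bsum_conv; auto. apply bsum_g2.
    + apply bsum_scal. left; apply Rinv_0_lt_compat; lra. apply bsum_plus. apply bsum_scal; auto. apply bsum_kn.
      apply bsum_scal; auto. apply bsum_conv; auto. apply bsum_g2.
    + apply bsum_scal. apply Rmult_le_pos. apply pos_INR. apply Dx_nn. apply bsum_g2. Qed.

Lemma final i : (i < N)%nat -> Un_cv (fun t => track_err N B d gf x y t i) 0 /\
  exists s, infinite_sum (fun t => gamma t * track_err N B d gf x y t i) s.
Proof. intros Hi.
  assert (Htn : forall t, 0 <= track_err N B d gf x y t i) by (intros; apply normx_nonneg).
  assert (HBd : 0 <= INR B * INR d) by (apply Rmult_le_pos; apply pos_INR).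
  split.
  - apply (cv0_squeeze _ (fun t => (INR B * INR d) * err t)).
    intros t. split; auto. rewrite Rmult_assoc. apply track_bound; auto.
    apply cv0_scal, err_to0.
  - apply bsum_infsum. intros; apply Rmult_le_pos; auto; apply gamma_nn.
    set (c2 := INR N * L * INR B * INR d).
    assert (Hc2 : 0 <= c2) by (unfold c2; pose proof (pos_INR N); pose proof (pos_INR B); pose proof (pos_INR d); repeat apply Rmult_le_pos; auto).
    pose proof eta_pos. pose proof C0y_nn.
    apply (bsum_le _ (fun t => (INR B * INR d) * (/ eta * (C0y * kn t + c2 * fsum t (fun s => kn (t - s)%nat * (gamma s * cc s)))))).
    + intros t. pose proof (gamma_nn t). pose proof (Hg_pos t). split. apply Rmult_le_pos; auto.
      apply Rle_trans with (gamma t * (INR B * (INR d * err t))). apply Rmult_le_compat_l; auto. apply track_bound; auto.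
      replace (gamma t * (INR B * (INR d * err t))) with ((INR B * INR d) * (gamma t * err t)) by ring.
      apply Rmult_le_compat_l; auto. unfold err.
      replace (gamma t * ((kn t * C0y + INR N * L * INR B * INR d * fsum t (fun s => kn (t - s)%nat * cc s)) / eta))
        with (/ eta * (C0y * (gamma t * kn t) + c2 * (gamma t * fsum t (fun s => kn (t - s)%nat * cc s)))) by (unfold c2; field; lra).
      apply Rmult_le_compat_l. left; apply Rinv_0_lt_compat; lra. apply Rplus_le_compat.
      apply Rmult_le_compat_l; auto. pose proof (kn_nn t). nra.
      apply Rmult_le_compat_l; auto. apply gamma_conv_le. apply cc_nn.
    + apply bsum_scal; auto. apply bsum_scal. left; apply Rinv_0_lt_compat; lra.
      apply bsum_plus. apply bsum_scal; auto. apply bsum_kn. apply bsum_scal; auto. apply bsum_conv.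
      intros; apply Rmult_le_pos. apply gamma_nn. apply cc_nn. apply bsum_gcc. Qed.

End Main.

Theorem mainTheorem6
  (N B d : nat)
  (K : nat -> vecd -> Prop)
  (f : nat -> vecx -> R) (gf : nat -> vecx -> vecx)
  (r : nat -> vecd -> R)
  (E : nat -> nat -> Prop)
  (sel : nat -> nat -> nat)
  (kappa : R) (a : nat -> nat -> nat -> nat -> R)
  (ft : nat -> nat -> vecd -> vecx -> R) (gft : nat -> nat -> vecd -> vecx -> vecd)
  (tau : nat -> R)
  (gamma : nat -> R)
  (x y : nat -> nat -> vecx) (phi : nat -> nat -> nat -> R)
  (xt : nat -> nat -> vecd)
  (* dimensions *)
  (HN : (1 <= N)%nat) (HB : (1 <= B)%nat) (Hd : (1 <= d)%nat)
  (* constraint sets *)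
  (HKne : forall l, (l < B)%nat -> exists z, K l z)
  (HKcl : forall l, (l < B)%nat -> closedd d (K l))
  (HKcv : forall l, (l < B)%nat -> convexd (K l))
  (* smooth parts: C^1 on an open set containing K, Lipschitz and bounded gradient on K *)
  (Hf_C1 : forall i, (i < N)%nat -> exists O : vecx -> Prop, openx B d O /\
      (forall z, inK B K z -> O z) /\
      (forall z, O z -> has_gradx B d (f i) (gf i z) z /\ contx_at B d (gf i) z))
  (Hf_Lip : forall i, (i < N)%nat -> exists L, forall z w, inK B K z -> inK B K w ->
      normx B d (subx (gf i z) (gf i w)) <= L * normx B d (subx z w))
  (Hf_bd : forall i, (i < N)%nat -> exists M, forall z, inK B K z -> normx B d (gf i z) <= M)
  (* nonsmooth parts *)
  (Hr_cvx : forall l, (l < B)%nat -> strongly_convex_on d (fun _ => True) 0 (r l))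
  (Hr_bd : forall l, (l < B)%nat -> exists M, forall z g, K l z -> is_subgrad d (r l) g z ->
      normd d g <= M)
  (* coercivity of U on K *)
  (HU : forall M, exists rho, forall z, inK B K z -> normx B d z >= rho ->
      fsum N (fun i => f i z) + fsum B (fun l => r l (z l)) >= M)
  (* network: digraph on {0,..,N-1}, strongly connected, with all self-loops *)
  (HE_nodes : forall j i, E j i -> (j < N)%nat /\ (i < N)%nat)
  (HE_sc : forall i j, (i < N)%nat -> (j < N)%nat -> reach E i j)
  (HE_loop : forall i, (i < N)%nat -> E i i)
  (* block selection *)
  (Hsel_rng : forall i t, (i < N)%nat -> (sel i t < B)%nat)
  (Hsel_cyc : forall i, (i < N)%nat -> exists T, (0 < T)%nat /\
      forall t l, (l < B)%nat -> exists s, (s < T)%nat /\ sel i (t + s)%nat = l)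
  (* weights *)
  (Hkappa : kappa > 0)
  (Ha_pos : forall l t i j, (l < B)%nat -> (i < N)%nat -> (j < N)%nat ->
      inEl E sel l t i j -> a l t i j > kappa)
  (Ha_zero : forall l t i j, (l < B)%nat -> (i < N)%nat -> (j < N)%nat ->
      ~ inEl E sel l t i j -> a l t i j = 0)
  (Ha_col : forall l t j, (l < B)%nat -> (j < N)%nat ->
      fsum N (fun i => a l t i j) = 1)
  (* surrogates *)
  (Htau : forall i, (i < N)%nat -> tau i > 0)
  (Hft_C1 : forall i l, (i < N)%nat -> (l < B)%nat -> forall w, inK B K w ->
      forall z, K l z -> has_gradd_on d (K l) (fun u => ft i l u w) (gft i l z w) z /\
                         contd_on d (K l) (fun u => gft i l u w) z)
  (Hft_sc : forall i l, (i < N)%nat -> (l < B)%nat -> forall w, inK B K w ->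
      strongly_convex_on d (K l) (tau i) (fun u => ft i l u w))
  (Hft_cons : forall i l, (i < N)%nat -> (l < B)%nat -> forall w, inK B K w ->
      forall k, (k < d)%nat -> gft i l (w l) w k = gf i w l k)
  (Hft_Lip : forall i l, (i < N)%nat -> (l < B)%nat -> exists L, forall z w w',
      K l z -> inK B K w -> inK B K w' ->
      normd d (subd (gft i l z w) (gft i l z w')) <= L * normx B d (subx w w'))
  (* step sizes *)
  (Hg_pos : forall t, 0 < gamma t <= 1)
  (Hg_dec : forall t, gamma (S t) <= gamma t)
  (Hg_div : cv_infty (fun n => sum_f_R0 gamma n))
  (Hg_sq : exists s, infinite_sum (fun t => (gamma t)^2) s)
  (* algorithm: initialization *)
  (Hx0 : forall i, (i < N)%nat -> inK B K (x O i))
  (Hy0 : forall i l k, (i < N)%nat -> (l < B)%nat -> (k < d)%nat ->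
      y O i l k = gf i (x O i) l k)
  (Hphi0 : forall i l, (i < N)%nat -> (l < B)%nat -> phi O i l = 1)
  (* algorithm: local block minimization *)
  (Hxt_K : forall t i, (i < N)%nat -> K (sel i t) (xt t i))
  (Hxt_min : forall t i, (i < N)%nat -> forall z, K (sel i t) z ->
      fhat N d ft gf i (sel i t) (xt t i) (x t i) (y t i (sel i t)) + r (sel i t) (xt t i)
      <= fhat N d ft gf i (sel i t) z (x t i) (y t i (sel i t)) + r (sel i t) z)
  (* algorithm: consensus / tracking updates (a vanishes off E_l^t, so the sums
     over N_{i,l}^t are sums over all agents) *)
  (Hphi : forall t i l, (i < N)%nat -> (l < B)%nat ->
      phi (S t) i l = fsum N (fun j => a l t i j * phi t j l))
  (Hx : forall t i l k, (i < N)%nat -> (l < B)%nat -> (k < d)%nat ->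
      x (S t) i l k = fsum N (fun j => a l t i j * phi t j l / phi (S t) i l *
                        (x t j l k + gamma t * dx sel xt x t j l k)))
  (Hy : forall t i l k, (i < N)%nat -> (l < B)%nat -> (k < d)%nat ->
      y (S t) i l k = fsum N (fun j => a l t i j / phi (S t) i l *
                        (phi t j l * y t j l k + gf j (x (S t) j) l k - gf j (x t j) l k)))
  : forall i, (i < N)%nat ->
      Un_cv (fun t => track_err N B d gf x y t i) 0 /\
      exists s, infinite_sum (fun t => gamma t * track_err N B d gf x y t i) s.

Proof.
  intros i Hi.
  destruct (W_unif N B d E sel kappa a HN HB Hd HE_nodes HE_sc HE_loop Hsel_cyc Hkappa Ha_pos Ha_zero) as [W [HW1 HWw]].
  destruct (finite_bound_R (fun j M => forall z, inK B K z -> normx B d (gf j z) <= M) N) as [Mg HMg].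
  { intros j M M' H HM z Hz. specialize (H z Hz). lra. }
  { intros j Hj. apply Hf_bd; auto. }
  destruct (finite_bound_R (fun j L => forall z w, inK B K z -> inK B K w ->
      normx B d (subx (gf j z) (gf j w)) <= L * normx B d (subx z w)) N) as [L0 HL0].
  { intros j M M' H HM z w Hz Hw. specialize (H z w Hz Hw). pose proof (normx_nonneg B d (subx z w)). nra. }
  { intros j Hj. apply Hf_Lip; auto. }
  destruct (finite_bound_R (fun l M => forall z g, K l z -> is_subgrad d (r l) g z -> normd d g <= M) B) as [Mr HMr].
  { intros l M M' H HM z g Hz Hg. specialize (H z g Hz Hg). lra. }
  { intros l Hl. apply Hr_bd; auto. }
  destruct (finite_min_pos tau N) as [tm [Htm0 Htm]].
  { intros; apply Rgt_lt, Htau; auto. }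
  eapply (final N B d K gf r E sel kappa a ft gft tau gamma x y phi xt HN HB Hd HKcl HKcv Hr_cvx HE_loop Hsel_rng
    Hkappa Ha_pos Ha_zero Ha_col Htau Hft_C1 Hft_sc Hft_cons Hg_pos Hg_dec Hg_sq Hx0 Hy0 Hphi0 Hxt_K Hxt_min Hphi Hx Hy
    W HW1 HWw Mg (Rmax L0 0) Mr tm).
  - intros j z Hj Hz. apply HMg; auto.
  - apply Rmax_r.
  - intros j z w Hj Hz Hw. eapply Rle_trans. apply HL0; auto. apply Rmult_le_compat_r. apply normx_nonneg. apply Rmax_l.
  - intros l z g Hl Hz Hg. eapply HMr; eauto.
  - auto.
  - auto.
  - auto.
Qed.
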